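(* Under the hypotheses of the preceding lemma (weight regularity, $\frac1N\sum_iw_i^4\to\mathbb E[W^4]<\infty$, $\beta=\beta_{c,N}={\rm asinh}(1/\nu_N)$, $\lambda=3/4$), for every $r\in\mathbb R$, \[ \lim_{N\to\infty}\int_{-\infty}^\infty e^{-NG_N(z/N^{1/4};r)}\,dz=\int_{-\infty}^\infty\exp\Big(zr\frac{\mathbb E[W]}{\sqrt{\mathbb E[W^2]}}-\frac1{12}\frac{\mathbb E[W^4]}{\mathbb E[W^2]^2}z^4\Big)dz. \]
   Context: Weights $w_i>0$, $W_N=w_{U_N}$ with $U_N$ uniform on $[N]$. Weight regularity: $W_N\to W$ in distribution, $\mathbb E[W_N^2]\to\mathbb E[W^2]<\infty$, $\mathbb E[W]>0$. $\nu_N=\mathbb E[W_N^2]/\mathbb E[W_N]$. $\alpha_N(\beta)=\sqrt{\sinh(\beta)/\mathbb E[W_N]}$ and $G_N(z;r)=\frac12z^2-\frac1N\sum_{i\in[N]}\log\cosh\big(\alpha_N(\beta)w_iz+r/N^\lambda\big)$. *)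

(* Defs.v *)
From Stdlib Require Import Reals Lra List.
Import ListNotations.
Open Scope R_scope.

Definition sumN (N : nat) (f : nat -> R) : R :=
  fold_right Rplus 0 (map f (seq 0 N)).

(* Weights form a (triangular) array: w N i is the weight of vertex i
   (i = 0..N-1, i.e. [N] reindexed) in the system of size N. *)

(* E[W_N^k] = (1/N) sum_{i in [N]} w_i^k, with W_N = w_{U_N}, U_N uniform on [N] *)
Definition emp_mom (w : nat -> nat -> R) (N k : nat) : R :=
  / INR N * sumN N (fun i => (w N i) ^ k).

Definition emp_cdf (w : nat -> nat -> R) (N : nat) (x : R) : R :=
  / INR N * sumN N (fun i => if Rle_dec (w N i) x then 1 else 0).

Definition is_cdf (F : R -> R) : Prop :=
  (forall x y, x <= y -> F x <= F y) /\
  (forall x eps, 0 < eps -> exists d, 0 < d /\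
       forall y, x <= y < x + d -> Rabs (F y - F x) < eps) /\
  (forall eps, 0 < eps -> exists M, forall x, x < - M -> Rabs (F x) < eps) /\
  (forall eps, 0 < eps -> exists M, forall x, M < x -> Rabs (F x - 1) < eps).

Definition improper_integral_0_inf (f : R -> R) (l : R) : Prop :=
  (forall b, 0 <= b -> inhabited (Riemann_integrable f 0 b)) /\
  (forall eps, 0 < eps -> exists M, forall b, M < b ->
     exists pr : Riemann_integrable f 0 b, Rabs (RiemannInt pr - l) < eps).

Definition improper_integral (f : R -> R) (l : R) : Prop :=
  (forall a b, a <= b -> inhabited (Riemann_integrable f a b)) /\
  (forall eps, 0 < eps -> exists M, forall a b, a < - M -> M < b ->
     exists pr : Riemann_integrable f a b, Rabs (RiemannInt pr - l) < eps).

(* For a nonnegative random variable W with distribution function F,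
   E[W^k] = \int_0^oo k x^(k-1) P(W > x) dx  (k >= 1);
   "moment_cdf F k m" says this expectation is finite and equals m. *)
Definition moment_cdf (F : R -> R) (k : nat) (m : R) : Prop :=
  improper_integral_0_inf (fun x => INR k * x ^ (k - 1) * (1 - F x)) m.

Definition nu (w : nat -> nat -> R) (N : nat) : R := emp_mom w N 2 / emp_mom w N 1.

Definition beta_c (w : nat -> nat -> R) (N : nat) : R := arcsinh (/ nu w N).

Definition alpha (w : nat -> nat -> R) (N : nat) (beta : R) : R :=
  sqrt (sinh beta / emp_mom w N 1).

Definition G (w : nat -> nat -> R) (N : nat) (beta lambda : R) (z r : R) : R :=
  z ^ 2 / 2 - / INR N * sumN N (fun i =>
     ln (cosh (alpha w N beta * w N i * z + r / Rpower (INR N) lambda))).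

(* Main.v *)
Require Import Defs.
From Stdlib Require Import Reals Lra Lia Psatz List ClassicalEpsilon.
From Coquelicot Require Import Coquelicot.
Open Scope R_scope.
Set Bullet Behavior "Strict Subproofs".
Ltac ad := auto_derive; repeat split; try easy; try ring; try field.

Lemma sumN_0 f : sumN 0 f = 0.
Proof. reflexivity. Qed.

Lemma sumN_S N f : sumN (S N) f = sumN N f + f N.
Proof.
  unfold sumN. rewrite seq_S, map_app, fold_right_app. simpl.
  generalize (map f (seq 0 N)). intros l. induction l; simpl; [ring|]. rewrite IHl. ring.
Qed.

Lemma sumN_ext N f g : (forall i, (i < N)%nat -> f i = g i) -> sumN N f = sumN N g.
Proof.
  induction N; intros H; [reflexivity|]. rewrite !sumN_S. rewrite IHN by (intros; apply H; lia).
  rewrite H by lia. reflexivity.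
Qed.

Lemma sumN_le N f g : (forall i, (i < N)%nat -> f i <= g i) -> sumN N f <= sumN N g.
Proof.
  induction N; intros H; [rewrite !sumN_0; lra|]. rewrite !sumN_S.
  pose proof (IHN ltac:(intros; apply H; lia)). pose proof (H N ltac:(lia)). lra.
Qed.

Lemma sumN_plus N f g : sumN N (fun i => f i + g i) = sumN N f + sumN N g.
Proof. induction N; [rewrite ?sumN_0; simpl; ring|]. rewrite !sumN_S, IHN. ring. Qed.

Lemma sumN_scal N c f : sumN N (fun i => c * f i) = c * sumN N f.
Proof. induction N; [rewrite ?sumN_0; simpl; ring|]. rewrite !sumN_S, IHN. ring. Qed.

Lemma sumN_const N c : sumN N (fun _ => c) = INR N * c.
Proof. induction N; [rewrite ?sumN_0; simpl; ring|]. rewrite !sumN_S, IHN, S_INR. ring. Qed.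

Lemma sumN_nonneg N f : (forall i, (i < N)%nat -> 0 <= f i) -> 0 <= sumN N f.
Proof. intros H. replace 0 with (sumN N (fun _ => 0)) at 1 by (rewrite sumN_const; ring).
  apply sumN_le. auto. Qed.

Lemma sumN_ge_term N f k : (k < N)%nat -> (forall i, (i < N)%nat -> 0 <= f i) -> f k <= sumN N f.
Proof.
  induction N; intros Hk H; [lia|]. rewrite sumN_S.
  destruct (Nat.eq_dec k N).
  - subst. pose proof (sumN_nonneg N f ltac:(intros; apply H; lia)). lra.
  - pose proof (IHN ltac:(lia) ltac:(intros; apply H; lia)). pose proof (H N ltac:(lia)). lra.
Qed.

Lemma sumN_poly N (w : nat -> R) c0 c1 c2 c3 c4 :
  sumN N (fun i => c0 + c1 * w i + c2 * w i ^ 2 + c3 * w i ^ 3 + c4 * w i ^ 4)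
  = INR N * c0 + c1 * sumN N w + c2 * sumN N (fun i => w i ^ 2)
    + c3 * sumN N (fun i => w i ^ 3) + c4 * sumN N (fun i => w i ^ 4).
Proof. induction N; [rewrite ?sumN_0; simpl; ring|]. rewrite !sumN_S, IHN, S_INR. ring. Qed.

Lemma Un_cv_sumN m (a : nat -> nat -> R) (l : nat -> R) :
  (forall j, (j < m)%nat -> Un_cv (a j) (l j)) ->
  Un_cv (fun N => sumN m (fun j => a j N)) (sumN m l).
Proof.
  induction m; intros H.
  - intros e He. exists 0%nat. intros. simpl. unfold R_dist. rewrite sumN_0; replace (sumN 0 l) with 0 by reflexivity; rewrite Rminus_0_r, Rabs_R0. lra.
  - apply Un_cv_ext with (fun N => sumN m (fun j => a j N) + a m N).
    { intros; rewrite sumN_S; auto. }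
    rewrite sumN_S. apply CV_plus. apply IHm; intros; apply H; lia. apply H; lia.
Qed.

Lemma eventually_fin m (P : nat -> nat -> Prop) :
  (forall j, (j < m)%nat -> exists N0, forall N, (N0 <= N)%nat -> P j N) ->
  exists N0, forall N, (N0 <= N)%nat -> forall j, (j < m)%nat -> P j N.
Proof.
  induction m; intros H.
  - exists 0%nat. intros; lia.
  - destruct IHm as [N1 HN1]. intros; apply H; lia.
    destruct (H m ltac:(lia)) as [N2 HN2].
    exists (max N1 N2). intros N HN j Hj.
    destruct (Nat.eq_dec j m). subst; apply HN2; lia. apply HN1; lia.
Qed.

Lemma INR_pos_N N : (1 <= N)%nat -> 0 < INR N.
Proof. intros; apply lt_0_INR; lia. Qed.

Lemma sum_eq_mom w N k : (1 <= N)%nat -> sumN N (fun i => w N i ^ k) = INR N * emp_mom w N k.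
Proof. intros HN. unfold emp_mom. pose proof (INR_pos_N N HN). field. lra. Qed.

Lemma emp_mom_pos w N k : (forall i, (i < N)%nat -> 0 < w N i) -> (1 <= N)%nat -> 0 < emp_mom w N k.
Proof.
  intros Hp HN. unfold emp_mom. apply Rmult_lt_0_compat.
  apply Rinv_0_lt_compat, INR_pos_N, HN.
  destruct N; [lia|]. rewrite sumN_S.
  pose proof (sumN_nonneg N (fun i => w (S N) i ^ k) ltac:(intros; apply pow_le; left; apply Hp; lia)).
  pose proof (pow_lt (w (S N) N) k (Hp N ltac:(lia))). lra.
Qed.

Lemma mom_CS w N : (1 <= N)%nat -> emp_mom w N 1 ^ 2 <= emp_mom w N 2.
Proof.
  intros HN. pose proof (INR_pos_N N HN).
  set (m := emp_mom w N 1).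
  assert (0 <= sumN N (fun i => m^2 + (-2*m) * w N i + 1 * w N i ^ 2 + 0 * w N i ^ 3 + 0 * w N i ^ 4)).
  { apply sumN_nonneg. intros. pose proof (Rle_0_sqr (m - w N i)); unfold Rsqr in *; nra. }
  rewrite sumN_poly in H0.
  replace (sumN N (w N)) with (sumN N (fun i => w N i ^ 1)) in H0 by (apply sumN_ext; intros; ring).
  rewrite !sum_eq_mom in H0 by auto. fold m in H0.
  assert (0 <= INR N * (emp_mom w N 2 - m^2)) by nra.
  apply Rmult_le_reg_l with (INR N); nra.
Qed.


Lemma cmp_deriv (g g' : R -> R) (a : R) :
  (forall x, a <= x -> is_derive g x (g' x)) ->
  (forall x, a <= x -> 0 <= g' x) ->
  forall y, a <= y -> g a <= g y.
Proof.
  intros Hd Hp y Hy.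
  destruct (Req_dec a y) as [<-|Hne]; [lra|].
  destruct (MVT_gen g a y g') as [c [Hc Heq]].
  - intros x Hx. apply Hd. rewrite Rmin_left in Hx; lra.
  - intros x Hx. apply continuity_pt_filterlim.
    apply (ex_derive_continuous g). exists (g' x). apply Hd.
    rewrite Rmin_left in Hx; lra.
  - rewrite Rmin_left in Hc by lra. rewrite Rmax_right in Hc by lra.
    assert (0 <= g' c * (y - a)) by (apply Rmult_le_pos; [apply Hp; lra | lra]).
    lra.
Qed.

Lemma cosh_pos' x : 0 < cosh x.
Proof. unfold cosh. pose proof (exp_pos x). pose proof (exp_pos (-x)). lra. Qed.

Lemma tanh_eq x : tanh x = (exp x - exp (-x)) / (exp x + exp (-x)).
Proof.
  unfold tanh, sinh, cosh. pose proof (exp_pos x). pose proof (exp_pos (-x)).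
  field. lra.
Qed.

Lemma is_derive_lncosh x : is_derive (fun y => ln (cosh y)) x (tanh x).
Proof.
  unfold cosh. rewrite tanh_eq. auto_derive.
  - pose proof (exp_pos x). pose proof (exp_pos (-x)). lra.
  - pose proof (exp_pos x). pose proof (exp_pos (-x)). field. lra.
Qed.

Lemma is_derive_tanh x : is_derive tanh x (1 - tanh x ^ 2).
Proof.
  apply is_derive_ext with (f := fun y => (exp y - exp (-y)) / (exp y + exp (-y))).
  { intros; rewrite tanh_eq; auto. }
  rewrite tanh_eq. pose proof (exp_pos x). pose proof (exp_pos (-x)).
  auto_derive.
  - lra.
  - field. lra.
Qed.

Lemma tanh_bounds x : -1 < tanh x < 1.
Proof.
  rewrite tanh_eq. pose proof (exp_pos x). pose proof (exp_pos (-x)).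
  split; [apply Rlt_div_r|apply Rlt_div_l]; lra.
Qed.

Lemma tanh_nonneg x : 0 <= x -> 0 <= tanh x.
Proof.
  intros H. rewrite tanh_eq. pose proof (exp_pos x). pose proof (exp_pos (-x)).
  apply Rdiv_le_0_compat; [|lra].
  assert (exp (-x) <= exp x) by (apply exp_le_3 || (destruct (Req_dec x 0); [subst; replace (-0) with 0 by ring; lra|]; left; apply exp_increasing; lra)).
  lra.
Qed.

Lemma tanh_odd x : tanh (- x) = - tanh x.
Proof. rewrite !tanh_eq. replace (- - x) with x by ring.
  pose proof (exp_pos x). pose proof (exp_pos (-x)). field. lra. Qed.

Lemma cosh_even x : cosh (- x) = cosh x.
Proof. unfold cosh. replace (- - x) with x by ring. field. Qed.

Lemma cosh0 : cosh 0 = 1.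
Proof. unfold cosh. replace (-0) with 0 by ring. rewrite exp_0. field. Qed.


Lemma tanh0 : tanh 0 = 0.
Proof. rewrite tanh_eq. replace (-0) with 0 by ring. rewrite exp_0. field. Qed.

Lemma deq (f : R -> R) x l l' : is_derive f x l -> l = l' -> is_derive f x l'.
Proof. intros H ->; exact H. Qed.

Lemma is_derive_tanh_poly (p p' : R -> R) (c : R) x :
  is_derive p x (p' x) -> is_derive (fun y => c * tanh y + p y) x (c * (1 - tanh x ^ 2) + p' x).
Proof.
  intros Hp. apply (is_derive_plus (fun y => c * tanh y) p); [|exact Hp].
  apply (is_derive_scal tanh x c). apply is_derive_tanh.
Qed.

Lemma tanh_le x : 0 <= x -> tanh x <= x.
Proof.
  intros Hx.
  pose proof (cmp_deriv (fun y => (-1) * tanh y + y) (fun y => (-1) * (1 - tanh y ^ 2) + 1) 0) as H.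
  cut ((-1) * tanh 0 + 0 <= (-1) * tanh x + x). { rewrite tanh0. lra. }
  apply H; auto.
  - intros y _. apply is_derive_tanh_poly with (p := fun y => y) (p' := fun _ => 1).
    ad.
  - intros y _. nra.
Qed.

Lemma tanh_ge x : 0 <= x -> x - x^3/3 <= tanh x.
Proof.
  intros Hx.
  pose proof (cmp_deriv (fun y => 1 * tanh y + (- y + y^3/3)) (fun y => 1 * (1 - tanh y ^ 2) + (-1 + y^2)) 0) as H.
  cut (1 * tanh 0 + (- 0 + 0^3/3) <= 1 * tanh x + (-x + x^3/3)). { rewrite tanh0. lra. }
  apply H; auto.
  - intros y _. apply is_derive_tanh_poly with (p := fun y => - y + y^3/3) (p' := fun y => -1 + y^2).
    ad.
  - intros y Hy. pose proof (tanh_le y Hy). pose proof (tanh_nonneg y Hy). nra.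
Qed.

Lemma tanh_le2 x : 0 <= x -> tanh x <= x - x^3/3 + 2 * x^5 / 15.
Proof.
  intros Hx.
  pose proof (cmp_deriv (fun y => (-1) * tanh y + (y - y^3/3 + 2*y^5/15))
     (fun y => (-1) * (1 - tanh y ^ 2) + (1 - y^2 + 2 * y^4/3)) 0) as H.
  cut ((-1) * tanh 0 + (0 - 0^3/3 + 2*0^5/15) <= (-1) * tanh x + (x - x^3/3 + 2*x^5/15)). { rewrite tanh0. lra. }
  apply H; auto.
  - intros y _. apply is_derive_tanh_poly with (p := fun y => y - y^3/3 + 2*y^5/15) (p' := fun y => 1 - y^2 + 2*y^4/3).
    ad.
  - intros y Hy. pose proof (tanh_ge y Hy).
    destruct (Rle_dec (y^2) (3/2)).
    + assert (0 <= y - y^3/3) by nra.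
      assert ((y - y^3/3)^2 <= tanh y ^2) by (apply pow_incr; lra). nra.
    + assert (0 <= tanh y ^ 2) by nra. nra.
Qed.

Lemma lncosh0 : ln (cosh 0) = 0.
Proof. rewrite cosh0. apply ln_1. Qed.

Lemma is_derive_lncosh_poly (p p' : R -> R) (c : R) x :
  is_derive p x (p' x) -> is_derive (fun y => c * ln (cosh y) + p y) x (c * tanh x + p' x).
Proof.
  intros Hp. apply (is_derive_plus (fun y => c * ln (cosh y)) p); [|exact Hp].
  apply (is_derive_scal (fun y => ln (cosh y)) x c). apply is_derive_lncosh.
Qed.

Lemma lncosh_upper x : 0 <= x -> ln (cosh x) <= x^2/2 - x^4/12 + x^6/45.
Proof.
  intros Hx.
  pose proof (cmp_deriv (fun y => (-1) * ln (cosh y) + (y^2/2 - y^4/12 + y^6/45))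
     (fun y => (-1) * tanh y + (y - y^3/3 + 2*y^5/15)) 0) as H.
  cut ((-1) * ln (cosh 0) + (0^2/2 - 0^4/12 + 0^6/45) <= (-1) * ln (cosh x) + (x^2/2 - x^4/12 + x^6/45)).
  { rewrite lncosh0. lra. }
  apply H; auto.
  - intros y _. apply is_derive_lncosh_poly with (p := fun y => y^2/2 - y^4/12 + y^6/45)
      (p' := fun y => y - y^3/3 + 2*y^5/15). ad.
  - intros y Hy. pose proof (tanh_le2 y Hy). lra.
Qed.

Lemma lncosh_lower x : 0 <= x -> x^2/2 - x^4/12 <= ln (cosh x).
Proof.
  intros Hx.
  pose proof (cmp_deriv (fun y => 1 * ln (cosh y) + (- (y^2/2 - y^4/12)))
     (fun y => 1 * tanh y + (- (y - y^3/3))) 0) as H.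
  cut (1 * ln (cosh 0) + (- (0^2/2 - 0^4/12)) <= 1 * ln (cosh x) + (- (x^2/2 - x^4/12))).
  { rewrite lncosh0. lra. }
  apply H; auto.
  - intros y _. apply is_derive_lncosh_poly with (p := fun y => - (y^2/2 - y^4/12))
      (p' := fun y => - (y - y^3/3)). ad.
  - intros y Hy. pose proof (tanh_ge y Hy). lra.
Qed.

Lemma lncosh_le_sq x : 0 <= x -> ln (cosh x) <= x^2/2.
Proof.
  intros Hx.
  pose proof (cmp_deriv (fun y => (-1) * ln (cosh y) + y^2/2)
     (fun y => (-1) * tanh y + y) 0) as H.
  cut ((-1) * ln (cosh 0) + 0^2/2 <= (-1) * ln (cosh x) + x^2/2).
  { rewrite lncosh0. lra. }
  apply H; auto.
  - intros y _. apply is_derive_lncosh_poly with (p := fun y => y^2/2) (p' := fun y => y). ad.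
  - intros y Hy. pose proof (tanh_le y Hy). lra.
Qed.

Lemma lncosh_lin x : 1 <= x -> ln (cosh x) <= ln (cosh 1) + (x - 1).
Proof.
  intros Hx.
  pose proof (cmp_deriv (fun y => (-1) * ln (cosh y) + y)
     (fun y => (-1) * tanh y + 1) 1) as H.
  cut ((-1) * ln (cosh 1) + 1 <= (-1) * ln (cosh x) + x). { lra. }
  apply H; auto.
  - intros y _. apply is_derive_lncosh_poly with (p := fun y => y) (p' := fun y => 1). ad.
  - intros y Hy. pose proof (tanh_bounds y). lra.
Qed.

Lemma lncosh_even x : ln (cosh (- x)) = ln (cosh x).
Proof. rewrite cosh_even. auto. Qed.

Lemma lncosh_err x :
  0 <= ln (cosh x) - (x^2/2 - x^4/12) /\ ln (cosh x) - (x^2/2 - x^4/12) <= x^4/12 /\ ln (cosh x) - (x^2/2 - x^4/12) <= x^6/45.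
Proof.
  assert (forall y, 0 <= y -> 0 <= ln (cosh y) - (y^2/2 - y^4/12) /\ ln (cosh y) - (y^2/2 - y^4/12) <= y^4/12 /\ ln (cosh y) - (y^2/2 - y^4/12) <= y^6/45).
  { intros y Hy. pose proof (lncosh_upper y Hy). pose proof (lncosh_lower y Hy).
    pose proof (lncosh_le_sq y Hy). lra. }
  destruct (Rle_dec 0 x). auto.
  rewrite <- lncosh_even.
  replace (x^2) with ((-x)^2) by ring. replace (x^4) with ((-x)^4) by ring.
  replace (x^6) with ((-x)^6) by ring. apply H. lra.
Qed.

Lemma lncosh_strict x : ln (cosh x) <= x^2/2 - / 20 * Rmin (x^4) (x^2).
Proof.
  assert (forall y, 0 <= y -> ln (cosh y) <= y^2/2 - / 20 * Rmin (y^4) (y^2)).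
  { intros y Hy. destruct (Rle_dec y 1).
    - pose proof (lncosh_upper y Hy).
      assert (y^4 <= y^2) by (assert (y^2 <= 1) by nra; nra).
      rewrite Rmin_left by lra.
      assert (y^6 <= y^4) by (assert (y^2 <= 1) by nra; nra). nra.
    - pose proof (lncosh_lin y ltac:(lra)). pose proof (lncosh_upper 1 ltac:(lra)).
      assert (1 < y) by lra. assert (1 <= y^2) by nra. assert (y^2 <= y^4) by nra. rewrite Rmin_right by lra.
      assert (ln (cosh 1) <= 1/2 - 1/12 + 1/45) by (simpl in *; lra).
      pose proof (Rle_0_sqr (y - 10/9)). unfold Rsqr in *. simpl. nra. }
  destruct (Rle_dec 0 x). auto.
  rewrite <- lncosh_even.
  replace (x^2) with ((-x)^2) by ring. replace (x^4) with ((-x)^4) by ring.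
  apply H. lra.
Qed.

Lemma tanh_lip a b : Rabs (tanh b - tanh a) <= Rabs (b - a).
Proof.
  destruct (MVT_abs tanh (fun y => 1 - tanh y ^ 2) a b) as [c [Hc _]].
  { intros c _. apply is_derive_Reals. apply is_derive_tanh. }
  rewrite Hc. pose proof (tanh_bounds c).
  assert (Rabs (1 - tanh c ^ 2) <= 1) by (apply Rabs_le; nra).
  pose proof (Rabs_pos (b - a)). nra.
Qed.

Lemma lncosh_shift a b : ln (cosh (a + b)) <= ln (cosh a) + b * tanh a + b^2.
Proof.
  destruct (MVT_gen (fun y => ln (cosh y)) a (a + b) tanh) as [c [Hc Heq]].
  { intros; apply is_derive_lncosh. }
  { intros x _. apply continuity_pt_filterlim. apply (ex_derive_continuous (fun y => ln (cosh y))).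
    eexists; apply is_derive_lncosh. }
  replace (a + b - a) with b in Heq by ring.
  pose proof (tanh_lip a c).
  assert (Rabs (c - a) <= Rabs b).
  { unfold Rmin, Rmax in Hc. destruct (Rle_dec a (a+b)).
    - rewrite Rabs_right by lra. rewrite Rabs_right by lra. lra.
    - rewrite (Rabs_left b) by lra. apply Rabs_le. lra. }
  assert (b * (tanh c - tanh a) <= b^2).
  { apply Rle_trans with (Rabs (b * (tanh c - tanh a))). apply Rle_abs.
    rewrite Rabs_mult. replace (b^2) with (Rabs b * Rabs b).
    2:{ rewrite <- Rabs_mult. rewrite Rabs_right; [ring|]. apply Rle_ge. nra. }
    apply Rmult_le_compat_l. apply Rabs_pos. lra. }
  simpl in Heq. nra.
Qed.


Lemma cdf_le1 F : is_cdf F -> forall x, F x <= 1.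
Proof.
  intros [Hm [_ [_ Hp]]] x.
  apply Rnot_lt_le; intros Hlt.
  destruct (Hp (F x - 1) ltac:(lra)) as [M HM].
  set (y := Rmax x (M + 1)).
  assert (M < y) by (unfold y; pose proof (Rmax_r x (M+1)); lra).
  assert (x <= y) by apply Rmax_l.
  specialize (HM y H). pose proof (Hm _ _ H0). apply Rabs_def2 in HM. lra.
Qed.

Lemma cdf_ge0 F : is_cdf F -> forall x, 0 <= F x.
Proof.
  intros [Hm [_ [Hn _]]] x.
  apply Rnot_lt_le; intros Hlt.
  destruct (Hn (- F x) ltac:(lra)) as [M HM].
  set (y := Rmin x (- M - 1)).
  assert (y < - M) by (unfold y; pose proof (Rmin_r x (-M-1)); lra).
  assert (y <= x) by apply Rmin_l.
  specialize (HM y H). pose proof (Hm _ _ H0). apply Rabs_def2 in HM. lra.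
Qed.

Lemma mono_cont_pt F x :
  (forall u v, u <= v -> F u <= F v) ->
  (forall eps, 0 < eps -> exists c d, c < x < d /\ F d - F c < eps) ->
  continuity_pt F x.
Proof.
  intros Hm H. unfold continuity_pt, continue_in, limit1_in, limit_in.
  intros eps Heps. destruct (H eps Heps) as [c [d [[Hc Hd] HF]]].
  exists (Rmin (x - c) (d - x)). split.
  - apply Rmin_pos; lra.
  - intros y [[_ _] Hy]. simpl in *. unfold R_dist in *.
    assert (Hy1 : Rabs (y - x) < x - c) by (eapply Rlt_le_trans; [exact Hy| apply Rmin_l]).
    assert (Hy2 : Rabs (y - x) < d - x) by (eapply Rlt_le_trans; [exact Hy| apply Rmin_r]).
    apply Rabs_def2 in Hy1. apply Rabs_def2 in Hy2.
    pose proof (Hm c y ltac:(lra)). pose proof (Hm y d ltac:(lra)).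
    pose proof (Hm c x ltac:(lra)). pose proof (Hm x d ltac:(lra)).
    apply Rabs_def1; lra.
Qed.

Fixpoint nest (F : R -> R) (a b : R) (n : nat) : R * R :=
  match n with
  | O => (a, b)
  | S n => let (c, d) := nest F a b n in
           let p1 := c + (d - c) / 4 in
           let p2 := c + (d - c) / 2 in
           let p3 := c + 3 * (d - c) / 4 in
           if Rle_dec (F p2 - F p1) (F p3 - F p2) then (p1, p2) else (p2, p3)
  end.

Lemma nest_prop F a b : a < b -> (forall u v, u <= v -> F u <= F v) ->
  forall n, fst (nest F a b n) < snd (nest F a b n) /\
    fst (nest F a b n) < fst (nest F a b (S n)) /\
    snd (nest F a b (S n)) < snd (nest F a b n) /\
    F (snd (nest F a b n)) - F (fst (nest F a b n)) <= (F b - F a) / 2 ^ n.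
Proof.
  intros Hab Hm.
  assert (Hstep : forall c d, c < d -> let (c', d') :=
           (let p1 := c + (d - c) / 4 in
           let p2 := c + (d - c) / 2 in
           let p3 := c + 3 * (d - c) / 4 in
           if Rle_dec (F p2 - F p1) (F p3 - F p2) then (p1, p2) else (p2, p3)) in
           c < c' /\ c' < d' /\ d' < d /\ F d' - F c' <= (F d - F c) / 2).
  { intros c d Hcd. simpl.
    pose proof (Hm c (c + (d-c)/4) ltac:(lra)).
    pose proof (Hm (c + 3*(d-c)/4) d ltac:(lra)).
    destruct (Rle_dec _ _); repeat split; try lra. }
  induction n.
  - simpl. pose proof (Hstep a b Hab). destruct (Rle_dec _ _); simpl in *; lra.
  - destruct IHn as [H1 [H2 [H3 H4]]].
    simpl in H2, H3 |- *. destruct (nest F a b n) as [c d] eqn:E. simpl in *.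
    pose proof (Hstep c d H1) as Hs. simpl in Hs.
    destruct (Rle_dec (F (c + (d - c) / 2) - F (c + (d - c) / 4))
                  (F (c + 3 * (d - c) / 4) - F (c + (d - c) / 2))) as [r0|r0]; simpl in *.
    + pose proof (Hstep _ _ (proj1 (proj2 Hs))) as Hs2. simpl in Hs2.
      destruct (Rle_dec _ _); simpl in *; repeat split; try lra;
      apply Rle_trans with ((F d - F c)/2); try lra;
      apply Rle_trans with ((F b - F a)/2^n/2); try lra;
      replace ((F b - F a) / 2^n / 2) with ((F b - F a) / (2 * 2^n)) by (field; apply pow_nonzero; lra); lra.
    + pose proof (Hstep _ _ (proj1 (proj2 Hs))) as Hs2. simpl in Hs2.
      destruct (Rle_dec _ _); simpl in *; repeat split; try lra;
      apply Rle_trans with ((F d - F c)/2); try lra;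
      apply Rle_trans with ((F b - F a)/2^n/2); try lra;
      replace ((F b - F a) / 2^n / 2) with ((F b - F a) / (2 * 2^n)) by (field; apply pow_nonzero; lra); lra.
Qed.

Lemma nest_mono F a b : a < b -> (forall u v, u <= v -> F u <= F v) ->
  forall n m, (n <= m)%nat -> fst (nest F a b n) <= fst (nest F a b m) /\ snd (nest F a b m) <= snd (nest F a b n).
Proof.
  intros Hab Hm n m Hnm. induction Hnm. lra.
  pose proof (nest_prop F a b Hab Hm m). lra.
Qed.

Lemma pow2_large e : 0 < e -> forall C, exists n, C / 2 ^ n < e.
Proof.
  intros He C.
  destruct (pow_lt_1_zero (/2) ltac:(rewrite Rabs_right; lra) (e / (Rabs C + 1))) as [n Hn].
  { apply Rdiv_lt_0_compat; [lra|pose proof (Rabs_pos C); lra]. }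
  exists n. specialize (Hn n (le_n n)).
  rewrite Rabs_right in Hn by (apply Rle_ge, pow_le; lra).
  rewrite <- Rinv_pow in Hn by lra.
  assert (0 < 2 ^ n) by (apply pow_lt; lra).
  pose proof (Rabs_pos C). pose proof (Rle_abs C).
  apply Rmult_lt_compat_l with (r := Rabs C + 1) in Hn; [|lra].
  replace ((Rabs C + 1) * (e / (Rabs C + 1))) with e in Hn by (field; lra).
  unfold Rdiv. apply Rle_lt_trans with ((Rabs C + 1) * / 2 ^ n); [|lra].
  apply Rmult_le_compat_r. left; apply Rinv_0_lt_compat; lra. lra.
Qed.

Lemma cont_point_exists F a b : is_cdf F -> a < b -> exists x, a < x < b /\ continuity_pt F x.
Proof.
  intros HF Hab. destruct HF as [Hm HF'].
  set (E := fun y => exists n, y = fst (nest F a b n)).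
  assert (Hb : bound E).
  { exists b. intros y [n ->]. pose proof (nest_mono F a b Hab Hm 0 n ltac:(lia)).
    pose proof (nest_prop F a b Hab Hm n). simpl in *. lra. }
  assert (Hne : exists y, E y) by (exists a; exists 0%nat; reflexivity).
  destruct (completeness E Hb Hne) as [x [Hub Hlub]].
  assert (Hin : forall n, fst (nest F a b n) < x < snd (nest F a b n)).
  { intros n. pose proof (nest_prop F a b Hab Hm n) as [H1 [H2 [H3 H4]]]. split.
    - apply Rlt_le_trans with (fst (nest F a b (S n))); auto. apply Hub. exists (S n); auto.
    - apply Rle_lt_trans with (snd (nest F a b (S n))); auto. apply Hlub.
      intros y [k ->]. destruct (Nat.le_ge_cases k (S n)) as [l|g].
      + pose proof (nest_mono F a b Hab Hm k (S n) l).
        pose proof (nest_prop F a b Hab Hm (S n)). lra.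
      + pose proof (nest_mono F a b Hab Hm (S n) k g).
        pose proof (nest_prop F a b Hab Hm k). lra. }
  exists x. split.
  - pose proof (Hin 1%nat). pose proof (nest_prop F a b Hab Hm 0). simpl in *. lra.
  - apply mono_cont_pt; auto. intros eps Heps.
    destruct (pow2_large eps Heps (F b - F a)) as [n Hn].
    exists (fst (nest F a b n)), (snd (nest F a b n)). split; auto.
    pose proof (nest_prop F a b Hab Hm n). lra.
Qed.


Lemma partition_exists F T0 eta : is_cdf F -> 0 <= T0 -> 0 < eta ->
  exists (m : nat) (t : nat -> R), (1 <= m)%nat /\ t 0%nat = 0 /\
    (forall j, (j < m)%nat -> t j < t (S j) /\ t (S j) <= t j + eta) /\
    (forall j, (1 <= j <= m)%nat -> continuity_pt F (t j)) /\
    T0 <= t m <= T0 + eta.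
Proof.
  intros HF HT Heta. set (h := eta / 2).
  assert (Hh : 0 < h) by (unfold h; lra).
  assert (Hc : forall j : nat, exists x, (INR j - 1/2) * h < x < INR j * h /\ continuity_pt F x).
  { intros j. destruct (cont_point_exists F ((INR j - 1/2) * h) (INR j * h) HF) as [x Hx].
    nra. exists x; auto. }
  set (tc := fun j => proj1_sig (constructive_indefinite_description _ (Hc j))).
  assert (Htc : forall j, (INR j - 1/2) * h < tc j < INR j * h /\ continuity_pt F (tc j)).
  { intros j. unfold tc. destruct (constructive_indefinite_description _ _). auto. }
  set (t := fun j : nat => match j with O => 0 | _ => tc j end).
  destruct (nfloor_ex (T0 / h)) as [n Hn]. { apply Rdiv_le_0_compat; lra. }
  assert (HT0 : INR n * h <= T0 < INR n * h + h).
  { destruct Hn as [H1 H2]. assert (E : T0 = (T0/h)*h) by (field; lra).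
    rewrite E. split; nra. }
  exists (S (S n)), t. split; [lia|]. split; [reflexivity|]. split; [|split].
  - intros j Hj. destruct j.
    + simpl. pose proof (Htc 1%nat). simpl in H. unfold h in *. lra.
    + change (t (S (S j))) with (tc (S (S j))). change (t (S j)) with (tc (S j)).
      pose proof (Htc (S j)). pose proof (Htc (S (S j))).
      rewrite S_INR in H0. unfold h in *. lra.
  - intros j Hj. destruct j; [lia|]. apply Htc.
  - change (t (S (S n))) with (tc (S (S n))). pose proof (Htc (S (S n))).
    rewrite !S_INR in H. unfold h in *. lra.
Qed.

Definition ind_gt (x c : R) : R := if Rle_dec x c then 0 else 1.

Lemma ind_gt_01 x c : 0 <= ind_gt x c <= 1.
Proof. unfold ind_gt; destruct (Rle_dec x c); lra. Qed.

Lemma one_minus_cdf w N c : (1 <= N)%nat ->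
  1 - emp_cdf w N c = / INR N * sumN N (fun i => ind_gt (w N i) c).
Proof.
  intros HN. unfold emp_cdf. pose proof (INR_pos_N N HN).
  replace (sumN N (fun i => ind_gt (w N i) c)) with
    (sumN N (fun i => 1 + (-1) * (if Rle_dec (w N i) c then 1 else 0))).
  - rewrite sumN_plus, sumN_const, sumN_scal. field. lra.
  - apply sumN_ext. intros. unfold ind_gt. destruct (Rle_dec _ _); ring.
Qed.

Lemma sumN_swap N m (a : nat -> nat -> R) :
  sumN N (fun i => sumN m (fun j => a i j)) = sumN m (fun j => sumN N (fun i => a i j)).
Proof.
  induction N.
  - rewrite sumN_0. replace (sumN m (fun j => sumN 0 (fun i => a i j))) with (sumN m (fun _ => 0)).
    rewrite sumN_const; ring. apply sumN_ext; intros; reflexivity.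
  - rewrite sumN_S, IHN. rewrite <- sumN_plus. apply sumN_ext. intros. rewrite sumN_S. reflexivity.
Qed.

Lemma sumN_telescope m (g : nat -> R) : sumN m (fun j => g j - g (S j)) = g 0%nat - g m.
Proof. induction m. rewrite sumN_0; ring. rewrite sumN_S, IHm. ring. Qed.

Lemma incr_chain (t : nat -> R) m :
  (forall j, (j < m)%nat -> t j < t (S j)) -> forall j k, (j <= k <= m)%nat -> t j <= t k.
Proof.
  intros Ht j k Hjk. destruct Hjk as [H1 H2]. induction H1. lra.
  pose proof (Ht m0 ltac:(lia)). specialize (IHle ltac:(lia)). lra.
Qed.

Lemma layer_pointwise (phi : R -> R) (t : nat -> R) (eta : R) (x : R) m :
  0 <= eta ->
  (forall u v, u <= v -> phi u <= phi v) ->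
  (forall j, (j < m)%nat -> t j < t (S j) /\ phi (t (S j)) - phi (t j) <= eta) ->
  sumN m (fun j => (phi (t (S j)) - phi (t j)) * ind_gt x (t (S j)))
    <= phi (Rmax (t 0%nat) (Rmin x (t m))) - phi (t 0%nat) <=
  sumN m (fun j => (phi (t (S j)) - phi (t j)) * ind_gt x (t (S j))) + eta /\
  (t m < x -> phi (Rmax (t 0%nat) (Rmin x (t m))) - phi (t 0%nat) =
     sumN m (fun j => (phi (t (S j)) - phi (t j)) * ind_gt x (t (S j)))).
Proof.
  intros Heta Hphi. induction m; intros Ht.
  - rewrite sumN_0. rewrite Rmin_comm.
    destruct (Rle_dec (t 0%nat) x).
    + rewrite Rmin_left by lra. rewrite Rmax_left by lra. split; [lra|intros; ring].
    + rewrite Rmin_right by lra. rewrite Rmax_left by lra. split; [lra|intros; ring].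
  - specialize (IHm ltac:(intros; apply Ht; lia)).
    assert (H0m : t 0%nat <= t m) by (apply (incr_chain t (S m)); [intros; apply Ht; lia| lia]).
    destruct (Ht m ltac:(lia)) as [Hm1 Hm2].
    rewrite sumN_S. unfold ind_gt in *.
    destruct (Rle_dec x (t m)).
    + rewrite (Rmin_left x (t (S m))) by lra. rewrite (Rmin_left x (t m)) in IHm by lra.
      destruct (Rle_dec x (t (S m))); [|lra].
      destruct IHm as [IH1 IH2]. split; [lra|intros; lra].
    + destruct IHm as [IH1 IH2]. specialize (IH2 ltac:(lra)).
      rewrite (Rmin_right x (t m)) in IH2 by lra. rewrite Rmax_right in IH2 by lra.
      destruct (Rle_dec x (t (S m))).
      * rewrite (Rmin_left x (t (S m))) by lra. rewrite Rmax_right by lra.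
        pose proof (Hphi (t m) x ltac:(lra)). pose proof (Hphi x (t (S m)) ltac:(lra)).
        split; [lra|intros; lra].
      * rewrite (Rmin_right x (t (S m))) by lra. rewrite Rmax_right by lra.
        split; [lra|intros; lra].
Qed.

Lemma is_RInt_pow_c (k : nat) (c a b : R) :
  is_RInt (fun x => INR k * x ^ (k - 1) * c) a b (c * (b ^ k - a ^ k)).
Proof.
  replace (c * (b ^ k - a ^ k)) with (minus (c * b^k) (c * a^k)) by (unfold minus, plus, opp; simpl; ring).
  apply (is_RInt_derive (fun x => c * x ^ k)).
  - intros x _. 
    evar (l : R). replace (INR k * x ^ (k - 1) * c) with l. 
    apply (is_derive_scal (fun x => x ^ k) x c). apply is_derive_pow. apply is_derive_id.
    unfold l. rewrite Nat.sub_1_r. simpl. unfold one; simpl. ring.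
  - intros x _. apply (ex_derive_continuous (fun x => INR k * x ^ (k - 1) * c)). auto_derive; auto.
Qed.

Lemma RInt_pow_c (k : nat) (c a b : R) :
  RInt (fun x => INR k * x ^ (k - 1) * c) a b = c * (b ^ k - a ^ k).
Proof. apply is_RInt_unique, is_RInt_pow_c. Qed.

Lemma ex_RInt_pow_c (k : nat) (c a b : R) : ex_RInt (fun x => INR k * x ^ (k - 1) * c) a b.
Proof. eexists; apply is_RInt_pow_c. Qed.

Lemma int_piece (F : R -> R) (k : nat) a b :
  (forall u v, u <= v -> F u <= F v) -> 0 <= a <= b ->
  ex_RInt (fun x => INR k * x ^ (k - 1) * (1 - F x)) a b ->
  (b ^ k - a ^ k) * (1 - F b) <= RInt (fun x => INR k * x ^ (k - 1) * (1 - F x)) a b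
  <= (b ^ k - a ^ k) * (1 - F a).
Proof.
  intros Hm Hab Hex. split.
  - rewrite Rmult_comm, <- RInt_pow_c. apply RInt_le; try lra; auto. apply ex_RInt_pow_c.
    intros x Hx. apply Rmult_le_compat_l. apply Rmult_le_pos. apply pos_INR. apply pow_le; lra.
    pose proof (Hm x b ltac:(lra)); lra.
  - rewrite Rmult_comm, <- RInt_pow_c. apply RInt_le; try lra; auto. apply ex_RInt_pow_c.
    intros x Hx. apply Rmult_le_compat_l. apply Rmult_le_pos. apply pos_INR. apply pow_le; lra.
    pose proof (Hm a x ltac:(lra)); lra.
Qed.

Lemma int_sandwich (F : R -> R) (k : nat) (t : nat -> R) m :
  (forall u v, u <= v -> F u <= F v) -> t 0%nat = 0 ->
  (forall j, (j < m)%nat -> t j < t (S j)) ->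
  ex_RInt (fun x => INR k * x ^ (k - 1) * (1 - F x)) 0 (t m) ->
  sumN m (fun j => (t (S j) ^ k - t j ^ k) * (1 - F (t (S j))))
    <= RInt (fun x => INR k * x ^ (k - 1) * (1 - F x)) 0 (t m) <=
  sumN m (fun j => (t (S j) ^ k - t j ^ k) * (1 - F (t j))).
Proof.
  intros Hm H0 Ht. induction m; intros Hex.
  - rewrite !sumN_0. rewrite H0. rewrite RInt_point. unfold zero; simpl. lra.
  - assert (H0m : 0 <= t m) by (rewrite <- H0; apply (incr_chain t (S m)); [intros; apply Ht; lia| lia]).
    pose proof (Ht m ltac:(lia)).
    assert (Ex1 : ex_RInt (fun x => INR k * x ^ (k - 1) * (1 - F x)) 0 (t m))
      by (apply (@ex_RInt_Chasles_1 R_CompleteNormedModule _ 0 (t m) (t (S m))); [lra|auto]).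
    assert (Ex2 : ex_RInt (fun x => INR k * x ^ (k - 1) * (1 - F x)) (t m) (t (S m)))
      by (apply (@ex_RInt_Chasles_2 R_CompleteNormedModule _ 0 (t m) (t (S m))); [lra|auto]).
    rewrite <- (@RInt_Chasles R_CompleteNormedModule _ 0 (t m) (t (S m))) by auto.
    unfold plus; simpl. rewrite !sumN_S.
    specialize (IHm ltac:(intros; apply Ht; lia) Ex1).
    pose proof (int_piece F k (t m) (t (S m)) Hm ltac:(lra) Ex2). lra.
Qed.

Lemma moment_info F k mo : moment_cdf F k mo ->
  (forall b, 0 <= b -> ex_RInt (fun x => INR k * x ^ (k - 1) * (1 - F x)) 0 b) /\
  (forall eps, 0 < eps -> exists M, forall b, M < b -> 0 <= b ->
     Rabs (RInt (fun x => INR k * x ^ (k - 1) * (1 - F x)) 0 b - mo) < eps).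
Proof.
  intros [H1 H2]. split.
  - intros b Hb. destruct (H1 b Hb) as [pr]. apply ex_RInt_Reals_1; auto.
  - intros eps Heps. destruct (H2 eps Heps) as [M HM]. exists M. intros b Hb Hb0.
    destruct (HM b Hb) as [pr Hpr]. rewrite (RInt_Reals _ _ _ pr). auto.
Qed.

Definition phik (k : nat) (x : R) := Rmax 0 x ^ k.

Lemma phik_mono k u v : u <= v -> phik k u <= phik k v.
Proof. intros H. unfold phik. apply pow_incr. split. apply Rmax_l.
  unfold Rmax; destruct (Rle_dec 0 u), (Rle_dec 0 v); lra. Qed.

Lemma phik_pos k x : 0 <= x -> phik k x = x ^ k.
Proof. intros; unfold phik; rewrite Rmax_right; auto. Qed.

Lemma emp_layer w N (t : nat -> R) m k eta : (1 <= N)%nat -> (1 <= k)%nat -> t 0%nat = 0 ->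
  (forall j, (j < m)%nat -> t j < t (S j) /\ t (S j) ^ k - t j ^ k <= eta) -> 0 <= eta ->
  (forall i, (i < N)%nat -> 0 < w N i) ->
  sumN m (fun j => (t (S j) ^ k - t j ^ k) * (1 - emp_cdf w N (t (S j))))
   <= / INR N * sumN N (fun i => Rmin (w N i) (t m) ^ k) <=
  sumN m (fun j => (t (S j) ^ k - t j ^ k) * (1 - emp_cdf w N (t (S j)))) + eta.
Proof.
  intros HN Hk H0 Ht Heta Hw. pose proof (INR_pos_N N HN).
  assert (Htp : forall j, (j <= m)%nat -> 0 <= t j).
  { intros j Hj. rewrite <- H0. apply (incr_chain t m); [intros; apply Ht; auto|lia]. }
  assert (Hphi : forall j, (j <= m)%nat -> phik k (t j) = t j ^ k) by (intros; apply phik_pos, Htp; auto).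
  assert (HL : forall i, (i < N)%nat ->
     sumN m (fun j => (t (S j) ^ k - t j ^ k) * ind_gt (w N i) (t (S j)))
      <= Rmin (w N i) (t m) ^ k <=
     sumN m (fun j => (t (S j) ^ k - t j ^ k) * ind_gt (w N i) (t (S j))) + eta).
  { intros i Hi. pose proof (layer_pointwise (phik k) t eta (w N i) m Heta (phik_mono k)) as HL.
    assert (E : sumN m (fun j => (phik k (t (S j)) - phik k (t j)) * ind_gt (w N i) (t (S j)))
              = sumN m (fun j => (t (S j) ^ k - t j ^ k) * ind_gt (w N i) (t (S j)))).
    { apply sumN_ext; intros. rewrite !Hphi by lia. reflexivity. }
    rewrite E in HL. rewrite Hphi in HL by lia. rewrite H0 in HL.
    rewrite pow_i in HL by lia. 
    pose proof (Htp m (le_n m)). pose proof (Hw i Hi).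
    rewrite Rmax_right in HL by (apply Rmin_glb; lra).
    rewrite phik_pos in HL by (apply Rmin_glb; lra).
    rewrite Rminus_0_r in HL. apply HL.
    intros j Hj. rewrite !Hphi by lia. apply Ht; auto. }
  assert (Hsum : sumN m (fun j => (t (S j) ^ k - t j ^ k) * (1 - emp_cdf w N (t (S j))))
     = / INR N * sumN N (fun i => sumN m (fun j => (t (S j) ^ k - t j ^ k) * ind_gt (w N i) (t (S j))))).
  { rewrite sumN_swap. rewrite <- sumN_scal. apply sumN_ext. intros j Hj.
    rewrite one_minus_cdf by auto. rewrite (sumN_scal N (t (S j) ^ k - t j ^ k) (fun i => ind_gt (w N i) (t (S j)))). ring. }
  rewrite Hsum. split.
  - apply Rmult_le_compat_l. left; apply Rinv_0_lt_compat; lra.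
    apply sumN_le. intros; apply HL; auto.
  - apply Rle_trans with (/ INR N * sumN N (fun i => sumN m (fun j => (t (S j) ^ k - t j ^ k) * ind_gt (w N i) (t (S j))) + eta)).
    + apply Rmult_le_compat_l. left; apply Rinv_0_lt_compat; lra.
      apply sumN_le. intros; apply HL; auto.
    + rewrite sumN_plus, sumN_const. right. field. lra.
Qed.

Lemma Un_cv_const c : Un_cv (fun _ => c) c.
Proof. intros e He. exists 0%nat. intros. unfold R_dist. rewrite Rminus_diag_eq, Rabs_R0; auto. Qed.

Lemma pow_diff_bound k a b : 0 <= a <= b -> b ^ k - a ^ k <= INR k * b ^ (k - 1) * (b - a).
Proof.
  intros Hab. induction k.
  - simpl. lra.
  - replace (S k - 1)%nat with k by lia. rewrite S_INR. simpl.
    assert (a ^ k <= b ^ k) by (apply pow_incr; lra).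
    destruct k.
    + simpl. lra.
    + replace (S k - 1)%nat with k in IHk by lia. simpl in IHk |- *.
      assert (0 <= a ^ k) by (apply pow_le; lra).
      assert (a * a ^ k <= b * b ^ k) by (apply Rmult_le_compat; try lra; apply pow_incr; lra).
      nra.
Qed.

Lemma trunc_moment w F k mo :
  (forall N i, (i < N)%nat -> 0 < w N i) -> is_cdf F ->
  (forall x, continuity_pt F x -> Un_cv (fun N => emp_cdf w N x) (F x)) ->
  moment_cdf F k mo -> (1 <= k)%nat ->
  forall delta, 0 < delta -> forall T0, 0 <= T0 -> exists T, T0 <= T /\
   exists N0, forall N, (N0 <= N)%nat -> (1 <= N)%nat ->
     Rabs (/ INR N * sumN N (fun i => Rmin (w N i) T ^ k) - mo) <= 3 * delta.
Proof.
  intros Hpos HF Hdist HM Hk delta Hd T0 HT0.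
  destruct (moment_info F k mo HM) as [Hex Hlim].
  destruct (Hlim delta Hd) as [M HMb].
  set (T1 := Rmax T0 (M + 1)).
  assert (HT1 : T0 <= T1 /\ M + 1 <= T1) by (split; [apply Rmax_l|apply Rmax_r]).
  set (C := INR k * (T1 + 1) ^ (k - 1) + 1).
  assert (HC : 0 < C).
  { unfold C. pose proof (pos_INR k). assert (0 <= (T1+1)^(k-1)) by (apply pow_le; lra). nra. }
  set (eta := Rmin 1 (delta / C)).
  assert (Heta : 0 < eta /\ eta <= 1 /\ eta * C <= delta).
  { unfold eta. split; [apply Rmin_pos; [lra|apply Rdiv_lt_0_compat; lra]|split; [apply Rmin_l|]].
    apply Rle_trans with (delta / C * C). apply Rmult_le_compat_r; [lra|apply Rmin_r].
    right; field; lra. }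
  destruct (partition_exists F T1 eta HF ltac:(lra) ltac:(lra)) as [m [t [Hm [Ht0 [Ht [Hc HTm]]]]]].
  exists (t m). split; [lra|].
  assert (Htp : forall j, (j <= m)%nat -> 0 <= t j <= t m).
  { intros j Hj. split; [rewrite <- Ht0|]; apply (incr_chain t m); try (intros; apply Ht; auto); lia. }
  assert (HDel : forall j, (j < m)%nat -> t j < t (S j) /\ t (S j) ^ k - t j ^ k <= delta).
  { intros j Hj. destruct (Ht j Hj) as [H1 H2]. split; auto.
    pose proof (Htp j ltac:(lia)). pose proof (Htp (S j) ltac:(lia)).
    eapply Rle_trans. apply pow_diff_bound. lra.
    apply Rle_trans with (INR k * (T1 + 1) ^ (k - 1) * eta).
    apply Rmult_le_compat. apply Rmult_le_pos. apply pos_INR. apply pow_le; lra. lra.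
    apply Rmult_le_compat_l. apply pos_INR. apply pow_incr; lra. lra.
    apply Rle_trans with (C * eta); [|lra]. unfold C. nra. }
  set (Lw := sumN m (fun j => (t (S j) ^ k - t j ^ k) * (1 - F (t (S j))))).
  assert (Hsand := int_sandwich F k t m (proj1 HF) Ht0 (fun j Hj => proj1 (Ht j Hj)) (Hex (t m) ltac:(lra))).
  assert (HRI : Rabs (RInt (fun x => INR k * x ^ (k - 1) * (1 - F x)) 0 (t m) - mo) < delta)
    by (apply HMb; lra).
  assert (Hup : sumN m (fun j => (t (S j) ^ k - t j ^ k) * (1 - F (t j))) <= Lw + delta).
  { unfold Lw. apply Rle_trans with (Lw + delta * ((1 - F (t 0%nat)) - (1 - F (t m)))).
    - unfold Lw. rewrite <- (sumN_telescope m (fun j => 1 - F (t j))).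
      rewrite <- sumN_scal, <- sumN_plus. apply sumN_le. intros j Hj.
      destruct (HDel j Hj). pose proof (proj1 HF (t j) (t (S j)) ltac:(lra)). nra.
    - pose proof (cdf_le1 F HF (t m)). pose proof (cdf_ge0 F HF (t 0%nat)). assert (0 <= delta * (1 - F (t m) + F (t 0%nat))) by (apply Rmult_le_pos; lra). unfold Lw in *. lra. }
  assert (Hcv : Un_cv (fun N => sumN m (fun j => (t (S j) ^ k - t j ^ k) * (1 - emp_cdf w N (t (S j))))) Lw).
  { apply (Un_cv_sumN m (fun j N => (t (S j) ^ k - t j ^ k) * (1 - emp_cdf w N (t (S j))))).
    intros j Hj. apply CV_mult. apply Un_cv_const. apply CV_minus. apply Un_cv_const.
    apply Hdist. apply Hc. lia. }
  destruct (Hcv delta Hd) as [N0 HN0].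
  exists N0. intros N HN HN1.
  pose proof (emp_layer w N t m k delta HN1 Hk Ht0 HDel ltac:(lra) (Hpos N)) as HE.
  specialize (HN0 N HN). unfold R_dist in HN0.
  apply Rabs_def2 in HN0. apply Rabs_def2 in HRI.
  apply Rabs_le. unfold Lw in *. lra.
Qed.

Lemma UI4 w F EW4 :
  (forall N i, (i < N)%nat -> 0 < w N i) -> is_cdf F ->
  (forall x, continuity_pt F x -> Un_cv (fun N => emp_cdf w N x) (F x)) ->
  moment_cdf F 4 EW4 -> Un_cv (fun N => emp_mom w N 4) EW4 ->
  forall eps, 0 < eps -> exists K, 0 < K /\ exists N0, forall N, (N0 <= N)%nat -> (1 <= N)%nat ->
    / INR N * sumN N (fun i => ind_gt (w N i) K * w N i ^ 4) <= eps.
Proof.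
  intros Hpos HF Hdist HM Hcv eps Heps.
  destruct (trunc_moment w F 4 EW4 Hpos HF Hdist HM ltac:(lia) (eps/8) ltac:(lra) 1 ltac:(lra))
    as [T [HT [N1 HN1]]].
  destruct (Hcv (eps/8) ltac:(lra)) as [N2 HN2].
  exists (2 * T). split; [lra|]. exists (max N1 N2). intros N HN HN1'.
  specialize (HN1 N ltac:(lia) HN1'). specialize (HN2 N ltac:(lia)).
  unfold R_dist in HN2. apply Rabs_def2 in HN2. apply Rabs_le_between in HN1.
  pose proof (INR_pos_N N HN1').
  assert (Hpw : forall i, (i < N)%nat -> ind_gt (w N i) (2 * T) * w N i ^ 4 <=
      16/15 * (w N i ^ 4 - Rmin (w N i) T ^ 4)).
  { intros i Hi. pose proof (Hpos N i Hi). unfold ind_gt. destruct (Rle_dec (w N i) (2*T)).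
    - assert (0 <= Rmin (w N i) T) by (apply Rmin_glb; lra).
      assert (Rmin (w N i) T ^ 4 <= w N i ^ 4) by (apply pow_incr; split; auto; apply Rmin_l).
      lra.
    - rewrite Rmin_right by lra.
      assert (16 * T ^ 4 <= w N i ^ 4).
      { replace (16 * T^4) with ((2*T)^4) by ring. apply pow_incr. lra. }
      lra. }
  apply Rle_trans with (/ INR N * sumN N (fun i => 16/15 * (w N i ^ 4 - Rmin (w N i) T ^ 4))).
  { apply Rmult_le_compat_l. left; apply Rinv_0_lt_compat; lra. apply sumN_le; auto. }
  rewrite sumN_scal.
  replace (sumN N (fun i => w N i ^ 4 - Rmin (w N i) T ^ 4)) with
    (sumN N (fun i => w N i ^ 4) + (-1) * sumN N (fun i => Rmin (w N i) T ^ 4)).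
  2:{ rewrite <- sumN_scal, <- sumN_plus. apply sumN_ext; intros; ring. }
  rewrite sum_eq_mom by auto.
  replace (/ INR N * (16 / 15 * (INR N * emp_mom w N 4 + -1 * sumN N (fun i => Rmin (w N i) T ^ 4))))
    with (16/15 * (emp_mom w N 4 - / INR N * sumN N (fun i => Rmin (w N i) T ^ 4))) by (field; lra).
  lra.
Qed.

Lemma m1_cv w F EW EW4 :
  (forall N i, (i < N)%nat -> 0 < w N i) -> is_cdf F ->
  (forall x, continuity_pt F x -> Un_cv (fun N => emp_cdf w N x) (F x)) ->
  moment_cdf F 1 EW ->
  moment_cdf F 4 EW4 -> Un_cv (fun N => emp_mom w N 4) EW4 ->
  Un_cv (fun N => emp_mom w N 1) EW.
Proof.
  intros Hpos HF Hdist HM1 HM4 Hcv4 eps Heps.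
  destruct (UI4 w F EW4 Hpos HF Hdist HM4 Hcv4 (eps/6) ltac:(lra)) as [K [HK [N1 HN1]]].
  destruct (trunc_moment w F 1 EW Hpos HF Hdist HM1 ltac:(lia) (eps/6) ltac:(lra) (Rmax K 1)
     ltac:(pose proof (Rmax_r K 1); lra)) as [T [HT [N2 HN2]]].
  pose proof (Rmax_l K 1). pose proof (Rmax_r K 1).
  exists (max 1 (max N1 N2)). intros N HN. unfold R_dist.
  specialize (HN1 N ltac:(lia) ltac:(lia)). specialize (HN2 N ltac:(lia) ltac:(lia)).
  apply Rabs_le_between in HN2.
  assert (HN1' : (1 <= N)%nat) by lia. pose proof (INR_pos_N N HN1').
  assert (Hpw : forall i, (i < N)%nat -> 0 <= w N i ^ 1 - Rmin (w N i) T ^ 1 <= ind_gt (w N i) K * w N i ^ 4).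
  { intros i Hi. pose proof (Hpos N i Hi). unfold ind_gt. simpl. rewrite !Rmult_1_r.
    destruct (Rle_dec (w N i) T).
    - rewrite Rmin_left by lra. destruct (Rle_dec (w N i) K); [lra|]. assert (0 < w N i * (w N i * (w N i * w N i))) by (repeat apply Rmult_lt_0_compat; lra). lra.
    - rewrite Rmin_right by lra. destruct (Rle_dec (w N i) K); [lra|].
      assert (w N i <= w N i * (w N i * (w N i * w N i))).
      { assert (1 <= w N i * (w N i * w N i)) by (assert (1 <= w N i * w N i) by nra; nra). nra. }
      lra. }
  assert (Hd : emp_mom w N 1 = / INR N * sumN N (fun i => Rmin (w N i) T ^ 1)
      + / INR N * sumN N (fun i => w N i ^ 1 - Rmin (w N i) T ^ 1)).
  { unfold emp_mom. rewrite <- Rmult_plus_distr_l, <- sumN_plus. f_equal. apply sumN_ext; intros; ring. }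
  assert (0 <= / INR N * sumN N (fun i => w N i ^ 1 - Rmin (w N i) T ^ 1) <= eps/6).
  { split.
    - apply Rmult_le_pos. left; apply Rinv_0_lt_compat; lra. apply sumN_nonneg. intros; apply Hpw; auto.
    - eapply Rle_trans; [|exact HN1]. apply Rmult_le_compat_l. left; apply Rinv_0_lt_compat; lra.
      apply sumN_le. intros; apply Hpw; auto. }
  apply Rabs_def1; lra.
Qed.

Lemma pos_fraction w F EW :
  (forall N i, (i < N)%nat -> 0 < w N i) -> is_cdf F ->
  (forall x, continuity_pt F x -> Un_cv (fun N => emp_cdf w N x) (F x)) ->
  moment_cdf F 1 EW -> 0 < EW ->
  exists c p, 0 < c /\ 0 < p /\ exists N0, forall N, (N0 <= N)%nat -> p <= 1 - emp_cdf w N c.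
Proof.
  intros Hpos HF Hdist HM HEW.
  assert (Hx : exists x, 0 < x /\ F x < 1).
  { apply Classical_Prop.NNPP. intros Hn.
    destruct (moment_info F 1 EW HM) as [_ Hl]. destruct (Hl (EW/2) ltac:(lra)) as [M HMb].
    set (b := Rmax 1 (M + 1)).
    assert (M < b /\ 0 < b) by (unfold b; pose proof (Rmax_l 1 (M+1)); pose proof (Rmax_r 1 (M+1)); lra).
    specialize (HMb b ltac:(lra) ltac:(lra)).
    rewrite (RInt_ext _ (fun _ => 0)) in HMb.
    - rewrite RInt_const in HMb. unfold scal in HMb; simpl in HMb. unfold mult in HMb; simpl in HMb.
      rewrite Rmult_0_r in HMb. apply Rabs_def2 in HMb. lra.
    - intros x Hx. rewrite Rmin_left in Hx by lra. rewrite Rmax_right in Hx by lra.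
      assert (HF1 : F x = 1).
      { pose proof (cdf_le1 F HF x). apply Rle_antisym; auto. apply Rnot_lt_le. intros Hlt.
        apply Hn. exists x. split; lra. }
      change (INR 1 * x ^ (1 - 1) * (1 - F x) = 0). rewrite HF1. ring. }
  destruct Hx as [x [Hx0 Hx1]].
  destruct (cont_point_exists F 0 x HF Hx0) as [c [Hc Hcc]].
  pose proof (proj1 HF c x ltac:(lra)).
  exists c, ((1 - F c) / 2). split; [lra|]. split; [lra|].
  destruct (Hdist c Hcc ((1 - F c)/2) ltac:(lra)) as [N0 HN0].
  exists N0. intros N HN. specialize (HN0 N HN). unfold R_dist in HN0. apply Rabs_def2 in HN0. lra.
Qed.


Lemma exRI (f : R -> R) a b : (forall x, continuous f x) -> ex_RInt f a b.
Proof. intros Hc. apply (@ex_RInt_continuous R_CompleteNormedModule). intros; apply Hc. Qed.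

Lemma tail_right (f : R -> R) D M b : (forall x, continuous f x) ->
  (forall x, 0 <= f x <= D * exp (- Rabs x)) -> 0 <= M <= b ->
  0 <= RInt f M b <= D * exp (- M).
Proof.
  intros Hc Hb HM. split.
  - rewrite <- (RInt_point M (fun _ => 0)) at 1 . 
    replace (RInt (fun _ : R => 0) M M) with (RInt (fun _ : R => 0) M b).
    2:{ rewrite !RInt_const. unfold scal; simpl; unfold mult; simpl; ring. }
    apply RInt_le; try lra. apply ex_RInt_const. apply exRI; auto. intros; apply Hb.
  - apply Rle_trans with (RInt (fun x => D * exp (- x)) M b).
    + apply RInt_le; try lra. apply exRI; auto.
      apply exRI. intros. apply (ex_derive_continuous (fun x => D * exp (-x))). auto_derive; auto.
      intros x Hx. rewrite <- (Rabs_right x) at 2 by lra. apply Hb.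
    + rewrite (is_RInt_unique _ _ _ (D * exp (- M) - D * exp (- b))).
      * pose proof (exp_pos (-b)). assert (0 <= D).
        { pose proof (Hb 0). pose proof (exp_pos (- Rabs 0)). nra. } nra.
      * replace (D * exp (- M) - D * exp (- b)) with (minus (- D * exp (- b)) (- D * exp (- M)))
          by (unfold minus, plus, opp; simpl; ring).
        apply (is_RInt_derive (fun x => - D * exp (- x))).
        -- intros x _. auto_derive; auto. ring.
        -- intros x _. apply (ex_derive_continuous (fun x => D * exp (-x))). auto_derive; auto.
Qed.

Lemma tail_left (f : R -> R) D M a : (forall x, continuous f x) ->
  (forall x, 0 <= f x <= D * exp (- Rabs x)) -> 0 <= M -> a <= - M ->
  0 <= RInt f a (- M) <= D * exp (- M).
Proof.
  intros Hc Hb HM Ha. split.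
  - replace 0 with (RInt (fun _ : R => 0) a (- M)).
    2:{ rewrite !RInt_const. unfold scal; simpl; unfold mult; simpl; ring. }
    apply RInt_le; try lra. apply ex_RInt_const. apply exRI; auto. intros; apply Hb.
  - apply Rle_trans with (RInt (fun x => D * exp x) a (- M)).
    + apply RInt_le; try lra. apply exRI; auto.
      apply exRI. intros. apply (ex_derive_continuous (fun x => D * exp x)). auto_derive; auto.
      intros x Hx. replace x with (- Rabs x) at 2 by (rewrite Rabs_left by lra; ring). apply Hb.
    + rewrite (is_RInt_unique _ _ _ (D * exp (- M) - D * exp a)).
      * pose proof (exp_pos a). assert (0 <= D).
        { pose proof (Hb 0). pose proof (exp_pos (- Rabs 0)). nra. } nra.
      * replace (D * exp (- M) - D * exp a) with (minus (D * exp (- M)) (D * exp a))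
          by (unfold minus, plus, opp; simpl; ring).
        apply (is_RInt_derive (fun x => D * exp x)).
        -- intros x _. auto_derive; auto. ring.
        -- intros x _. apply (ex_derive_continuous (fun x => D * exp x)). auto_derive; auto.
Qed.

Lemma RInt_split3 (f : R -> R) a b M : (forall x, continuous f x) -> a <= - M -> - M <= M -> M <= b ->
  RInt f a b = RInt f a (- M) + RInt f (- M) M + RInt f M b.
Proof.
  intros Hc H1 H2 H3.
  rewrite <- (@RInt_Chasles R_CompleteNormedModule f a (- M) b) by (apply exRI; auto).
  rewrite <- (@RInt_Chasles R_CompleteNormedModule f (- M) M b) by (apply exRI; auto).
  unfold plus; simpl. ring.
Qed.

Lemma core_bound (f : R -> R) D M a b : (forall x, continuous f x) ->
  (forall x, 0 <= f x <= D * exp (- Rabs x)) -> 0 <= M -> a <= - M -> M <= b ->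
  0 <= RInt f a b - RInt f (- M) M <= 2 * D * exp (- M).
Proof.
  intros Hc Hb HM Ha Hbb. rewrite (RInt_split3 f a b M) by (auto; lra).
  pose proof (tail_left f D M a Hc Hb HM Ha). pose proof (tail_right f D M b Hc Hb ltac:(lra)). lra.
Qed.

Lemma exp_small D eps : 0 < eps -> exists M, 0 <= M /\ forall M', M <= M' -> 2 * Rabs D * exp (- M') < eps.
Proof.
  intros He. exists ((2 * Rabs D + 1) / eps). split.
  { apply Rdiv_le_0_compat; [pose proof (Rabs_pos D); lra|lra]. }
  intros M' HM'.
  assert (0 <= M') by (eapply Rle_trans; [|exact HM']; apply Rdiv_le_0_compat; [pose proof (Rabs_pos D); lra|lra]).
  assert (1 + M' <= exp M') by (destruct (Req_dec M' 0); [subst; rewrite exp_0; lra| left; apply exp_ineq1; auto]).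
  rewrite exp_Ropp. pose proof (Rabs_pos D). pose proof (exp_pos M').
  apply Rmult_lt_reg_r with (exp M'); auto. rewrite Rmult_assoc, Rinv_l by lra.
  assert (eps * ((2 * Rabs D + 1) / eps) = 2 * Rabs D + 1) by (field; lra).
  assert (eps * ((2 * Rabs D + 1) / eps) <= eps * M') by (apply Rmult_le_compat_l; lra).
  nra.
Qed.

Lemma lim_le (u : nat -> R) l c N0 : Un_cv u l -> (forall n, (N0 <= n)%nat -> u n <= c) -> l <= c.
Proof.
  intros Hu Hc. apply Rnot_lt_le. intros Hlt.
  destruct (Hu (l - c) ltac:(lra)) as [N HN]. specialize (HN (max N N0) ltac:(lia)).
  specialize (Hc (max N N0) ltac:(lia)). unfold R_dist in HN. apply Rabs_def2 in HN. lra.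
Qed.

Lemma improper_exists (f : R -> R) D : (forall x, continuous f x) ->
  (forall x, 0 <= f x <= D * exp (- Rabs x)) ->
  exists l, improper_integral f l /\
   forall M a b, 0 <= M -> a <= - M -> M <= b -> Rabs (RInt f a b - l) <= 2 * D * exp (- M).
Proof.
  intros Hc Hb.
  assert (HD : 0 <= D) by (pose proof (Hb 0); pose proof (exp_pos (- Rabs 0)); nra).
  set (s := fun n : nat => RInt f (- INR n) (INR n)).
  assert (Hs : forall n m, (n <= m)%nat -> 0 <= s m - s n <= 2 * D * exp (- INR n)).
  { intros n m Hnm. unfold s. apply core_bound; auto. apply pos_INR.
    assert (INR n <= INR m) by (apply le_INR; auto). lra. apply le_INR; auto. }
  assert (Hcau : Cauchy_crit s).
  { intros eps Heps. destruct (exp_small D eps Heps) as [M [HM0 HM]].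
    destruct (nfloor_ex M HM0) as [n0 Hn0].
    exists (S n0). intros n m Hn Hm. unfold Rdist.
    assert (Hn' : M <= INR n) by (apply Rle_trans with (INR (S n0)); [rewrite S_INR; lra| apply le_INR; lia]).
    assert (Hm' : M <= INR m) by (apply Rle_trans with (INR (S n0)); [rewrite S_INR; lra| apply le_INR; lia]).
    destruct (Nat.le_ge_cases n m) as [Hnm|Hnm].
    - pose proof (Hs n m Hnm). specialize (HM (INR n) Hn'). rewrite Rabs_right in HM by lra.
      rewrite Rabs_minus_sym. rewrite Rabs_right by lra. lra.
    - pose proof (Hs m n Hnm). specialize (HM (INR m) Hm'). rewrite Rabs_right in HM by lra.
      rewrite Rabs_right by lra. lra. }
  destruct (Rcomplete.R_complete s Hcau) as [l Hl].
  assert (Hkey : forall M a b, 0 <= M -> a <= - M -> M <= b -> Rabs (RInt f a b - l) <= 2 * D * exp (- M)).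
  { intros M a b HM Ha Hbb.
    destruct (nfloor_ex M HM) as [n0 Hn0].
    assert (H1 : 0 <= l - RInt f (- M) M).
    { cut (- l <= - RInt f (- M) M). lra.
      apply (lim_le (fun n => - s n) (- l) (- RInt f (- M) M) (S n0)).
      apply CV_opp; auto. intros n Hn.
      assert (M <= INR n) by (apply Rle_trans with (INR (S n0)); [rewrite S_INR; lra| apply le_INR; lia]).
      pose proof (core_bound f D M (- INR n) (INR n) Hc Hb HM ltac:(lra) ltac:(lra)). unfold s. lra. }
    assert (H2 : l - RInt f (- M) M <= 2 * D * exp (- M)).
    { apply (lim_le (fun n => s n - RInt f (- M) M) (l - RInt f (- M) M) _ (S n0)).
      apply CV_minus; auto. intros e He; exists 0%nat; intros; unfold R_dist; rewrite Rminus_diag_eq, Rabs_R0; auto.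
      intros n Hn.
      assert (M <= INR n) by (apply Rle_trans with (INR (S n0)); [rewrite S_INR; lra| apply le_INR; lia]).
      pose proof (core_bound f D M (- INR n) (INR n) Hc Hb HM ltac:(lra) ltac:(lra)). unfold s. lra. }
    pose proof (core_bound f D M a b Hc Hb HM Ha Hbb).
    apply Rabs_le. lra. }
  exists l. split; auto. split.
  - intros a b Hab. constructor. apply ex_RInt_Reals_0. apply exRI; auto.
  - intros eps Heps. destruct (exp_small D eps Heps) as [M [HM0 HM]].
    exists M. intros a b Ha Hbb. exists (ex_RInt_Reals_0 f a b (exRI f a b Hc)).
    rewrite <- RInt_Reals. eapply Rle_lt_trans. apply (Hkey M a b HM0); lra.
    specialize (HM M (Rle_refl M)). rewrite Rabs_right in HM by lra. lra.
Qed.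

Lemma improper_unique (f : R -> R) l1 l2 : improper_integral f l1 -> improper_integral f l2 -> l1 = l2.
Proof.
  intros [_ H1] [_ H2]. apply Rle_antisym; apply Rnot_lt_le; intros Hlt.
  - destruct (H1 ((l1 - l2)/2) ltac:(lra)) as [M1 HM1]. destruct (H2 ((l1 - l2)/2) ltac:(lra)) as [M2 HM2].
    set (M := Rmax (Rabs M1) (Rabs M2) + 1).
    assert (Rabs M1 <= Rmax (Rabs M1) (Rabs M2)) by apply Rmax_l.
    assert (Rabs M2 <= Rmax (Rabs M1) (Rabs M2)) by apply Rmax_r.
    pose proof (Rle_abs M1). pose proof (Rle_abs M2).
    destruct (HM1 (-M) M ltac:(unfold M; lra) ltac:(unfold M; lra)) as [p1 Hp1].
    destruct (HM2 (-M) M ltac:(unfold M; lra) ltac:(unfold M; lra)) as [p2 Hp2].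
    rewrite <- RInt_Reals in Hp1, Hp2. apply Rabs_def2 in Hp1. apply Rabs_def2 in Hp2. lra.
  - destruct (H1 ((l2 - l1)/2) ltac:(lra)) as [M1 HM1]. destruct (H2 ((l2 - l1)/2) ltac:(lra)) as [M2 HM2].
    set (M := Rmax (Rabs M1) (Rabs M2) + 1).
    assert (Rabs M1 <= Rmax (Rabs M1) (Rabs M2)) by apply Rmax_l.
    assert (Rabs M2 <= Rmax (Rabs M1) (Rabs M2)) by apply Rmax_r.
    pose proof (Rle_abs M1). pose proof (Rle_abs M2).
    destruct (HM1 (-M) M ltac:(unfold M; lra) ltac:(unfold M; lra)) as [p1 Hp1].
    destruct (HM2 (-M) M ltac:(unfold M; lra) ltac:(unfold M; lra)) as [p2 Hp2].
    rewrite <- RInt_Reals in Hp1, Hp2. apply Rabs_def2 in Hp1. apply Rabs_def2 in Hp2. lra.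
Qed.

Lemma improper_tail (f : R -> R) D l : (forall x, continuous f x) ->
  (forall x, 0 <= f x <= D * exp (- Rabs x)) -> improper_integral f l ->
  forall M, 0 <= M -> Rabs (RInt f (- M) M - l) <= 2 * D * exp (- M).
Proof.
  intros Hc Hb Hl M HM. destruct (improper_exists f D Hc Hb) as [l' [Hl' Ht]].
  rewrite (improper_unique f l l') by auto. apply Ht; lra.
Qed.

Lemma dct (fn : nat -> R -> R) (f : R -> R) D N1 (I : nat -> R) Il :
  (forall N, (N1 <= N)%nat -> forall x, continuous (fn N) x) -> (forall x, continuous f x) ->
  (forall N, (N1 <= N)%nat -> forall x, 0 <= fn N x <= D * exp (- Rabs x)) ->
  (forall x, 0 <= f x <= D * exp (- Rabs x)) ->
  (forall M eps, 0 < eps -> exists N0, forall N, (N0 <= N)%nat -> forall x, Rabs x <= M -> Rabs (fn N x - f x) <= eps) ->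
  (forall N, (N1 <= N)%nat -> improper_integral (fn N) (I N)) -> improper_integral f Il ->
  Un_cv I Il.
Proof.
  intros Hcn Hc Hbn Hb Hloc HI HIl eps Heps.
  destruct (exp_small D (eps/3) ltac:(lra)) as [M [HM0 HM]].
  specialize (HM M (Rle_refl M)).
  assert (HD : 0 <= D) by (pose proof (Hb 0); pose proof (exp_pos (- Rabs 0)); nra).
  rewrite Rabs_right in HM by lra.
  destruct (Hloc M (eps / (3 * (2 * M + 1))) ltac:(apply Rdiv_lt_0_compat; lra)) as [N0 HN0].
  exists (max N0 N1). intros N HN. unfold R_dist.
  pose proof (improper_tail (fn N) D (I N) (Hcn N ltac:(lia)) (Hbn N ltac:(lia)) (HI N ltac:(lia)) M HM0).
  pose proof (improper_tail f D Il Hc Hb HIl M HM0).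
  assert (Rabs (RInt (fn N) (- M) M - RInt f (- M) M) <= (M - - M) * (eps / (3 * (2 * M + 1)))).
  { rewrite <- (@RInt_minus R_CompleteNormedModule) by (apply exRI; auto; apply Hcn; lia).
    apply abs_RInt_le_const. lra. apply exRI. intros x.
    apply (continuous_minus (U:=R_UniformSpace) (V:=R_NormedModule) (fn N) f x); auto. apply Hcn; lia.
    intros t Ht. apply HN0. lia. apply Rabs_le; lra. }
  assert ((M - - M) * (eps / (3 * (2 * M + 1))) <= eps / 3).
  { replace ((M - - M) * (eps / (3 * (2 * M + 1)))) with (eps / 3 * (2 * M / (2 * M + 1))) by (field; lra).
    assert (0 <= 2 * M / (2 * M + 1) <= 1). { split. apply Rdiv_le_0_compat; lra. apply Rmult_le_reg_r with (2*M+1); [lra|]. unfold Rdiv. rewrite Rmult_assoc, Rinv_l by lra. lra. } nra. }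
  apply Rabs_le_between in H. apply Rabs_le_between in H0. apply Rabs_le_between in H1.
  apply Rabs_def1; lra.
Qed.


Lemma Q_facts N : (1 <= N)%nat ->
  let Q := Rpower (INR N) (1/4) in
  0 < Q /\ 1 <= Q /\ Q ^ 4 = INR N /\ Rpower (INR N) (3/4) = Q ^ 3.
Proof.
  intros HN Q. pose proof (INR_pos_N N HN).
  assert (HQ : 0 < Q) by (unfold Q, Rpower; apply exp_pos).
  assert (Hp : forall k : nat, Q ^ k = Rpower (INR N) (1/4 * INR k)).
  { intros k. unfold Q. rewrite <- Rpower_pow by (unfold Rpower; apply exp_pos). rewrite Rpower_mult. auto. }
  split; [auto|split; [|split]].
  - unfold Q, Rpower.
    assert (0 <= ln (INR N)). { rewrite <- ln_1. apply ln_le; [lra|]. apply (le_INR 1); auto. }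
    destruct (Rle_lt_or_eq_dec 0 (1/4 * ln (INR N))) as [E|E]; [lra| |].
    + pose proof (exp_increasing _ _ E). rewrite exp_0 in H1. lra.
    + rewrite <- E, exp_0. lra.
  - rewrite Hp. replace (1/4 * INR 4) with 1 by (simpl; field). apply Rpower_1; auto.
  - rewrite Hp. f_equal. simpl. field.
Qed.

Lemma alpha_eq w N : (forall i, (i < N)%nat -> 0 < w N i) -> (1 <= N)%nat ->
  alpha w N (beta_c w N) = / sqrt (emp_mom w N 2).
Proof.
  intros Hp HN. pose proof (emp_mom_pos w N 1 Hp HN). pose proof (emp_mom_pos w N 2 Hp HN).
  unfold alpha, beta_c, nu. rewrite sinh_arcsinh.
  replace (/ (emp_mom w N 2 / emp_mom w N 1) / emp_mom w N 1) with (/ emp_mom w N 2) by (field; lra).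
  rewrite sqrt_inv. auto.
Qed.

Definition Eerr (x : R) := ln (cosh x) - (x^2/2 - x^4/12).

Lemma L_decomp w N (a Q r z : R) : (1 <= N)%nat -> 0 < Q -> Q ^ 4 = INR N -> 0 < a ->
  a ^ 2 * emp_mom w N 2 = 1 ->
  sumN N (fun i => ln (cosh (a * w N i * (z / Q) + r / Q ^ 3))) - INR N * (z / Q) ^ 2 / 2 =
  r * z * (a * emp_mom w N 1) + r ^ 2 / (2 * Q ^ 2)
  - / 12 * ((a ^ 4 * emp_mom w N 4) * z ^ 4 + 4 * (a ^ 3 * emp_mom w N 3) * r * z ^ 3 / Q ^ 2
            + 6 * r ^ 2 * z ^ 2 / Q ^ 4 + 4 * (a * emp_mom w N 1) * r ^ 3 * z / Q ^ 6 + r ^ 4 / Q ^ 8)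
  + sumN N (fun i => Eerr (a * w N i * (z / Q) + r / Q ^ 3)).
Proof.
  intros HN HQ HQ4 Ha Ham.
  set (u := z / Q). set (s := r / Q ^ 3).
  assert (Hs : sumN N (fun i => ln (cosh (a * w N i * u + s))) =
     sumN N (fun i => (s^2/2 - s^4/12) + (a*u*s - 4*a*u*s^3/12) * w N i + (a^2*u^2/2 - 6*a^2*u^2*s^2/12) * w N i ^ 2
        + (- 4 * a^3*u^3*s/12) * w N i ^ 3 + (- a^4*u^4/12) * w N i ^ 4)
     + sumN N (fun i => Eerr (a * w N i * u + s))).
  { rewrite <- sumN_plus. apply sumN_ext. intros i _. cbv beta. unfold Eerr. field. }
  rewrite Hs, sumN_poly. clear Hs.
  replace (sumN N (w N)) with (sumN N (fun i => w N i ^ 1)) by (apply sumN_ext; intros; ring).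
  rewrite !sum_eq_mom by auto.
  assert (Hm2 : emp_mom w N 2 = / a ^ 2).
  { assert (a^2 <> 0) by (apply pow_nonzero; lra). apply (Rmult_eq_reg_l (a^2)); auto. rewrite Ham. field. lra. }
  rewrite Hm2. rewrite <- HQ4. unfold u, s. field. lra.
Qed.

Lemma Eerr_bounds x : 0 <= Eerr x /\ Eerr x <= x^4/12 /\ Eerr x <= x^6/45.
Proof. unfold Eerr. apply lncosh_err. Qed.

Lemma pow4_sum y s : (y + s) ^ 4 <= 8 * (y ^ 4 + s ^ 4).
Proof.
  assert (H1 : (y + s)^2 <= 2 * (y^2 + s^2)) by (pose proof (Rle_0_sqr (y - s)); unfold Rsqr in *; nra).
  assert (H2 : (y^2 + s^2)^2 <= 2 * (y^4 + s^4)) by (pose proof (Rle_0_sqr (y^2 - s^2)); unfold Rsqr in *; nra).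
  assert (H3 : ((y+s)^2)^2 <= (2 * (y^2 + s^2))^2) by (apply pow_incr; split; [apply pow2_ge_0|auto]).
  replace ((y+s)^4) with (((y+s)^2)^2) by ring. nra.
Qed.

Lemma Eerr_pt a v z Q r K Z : 0 < a -> 0 < v -> 1 <= Q -> 0 < K -> Rabs z <= Z ->
  Eerr (a * v * (z / Q) + r / Q ^ 3) <=
   8 * (a * K * Z / Q + Rabs r / Q ^ 3) ^ 2 * ((a * v * (z / Q)) ^ 4 + (r / Q ^ 3) ^ 4)
   + 8 * ind_gt v K * (a * v * (z / Q)) ^ 4 + 8 * (r / Q ^ 3) ^ 4.
Proof.
  intros Ha Hv HQ HK Hz.
  set (y := a * v * (z / Q)). set (s := r / Q ^ 3). set (eta := a * K * Z / Q + Rabs r / Q ^ 3).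
  destruct (Eerr_bounds (y + s)) as [E0 [E1 E2]].
  pose proof (pow4_sum y s).
  assert (Hy4 : 0 <= y^4) by (replace (y^4) with ((y^2)^2) by ring; apply pow2_ge_0).
  assert (Hs4 : 0 <= s^4) by (replace (s^4) with ((s^2)^2) by ring; apply pow2_ge_0).
  assert (Hx4 : 0 <= (y+s)^4) by (replace ((y+s)^4) with (((y+s)^2)^2) by ring; apply pow2_ge_0).
  assert (He : 0 <= eta ^ 2) by apply pow2_ge_0.
  assert (0 <= 8 * eta ^ 2 * (y ^ 4 + s ^ 4)) by (apply Rmult_le_pos; lra).
  unfold ind_gt. destruct (Rle_dec v K).
  - assert (Hab : Rabs (y + s) <= eta).
    { eapply Rle_trans. apply Rabs_triang. unfold eta, y, s. apply Rplus_le_compat.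
      + replace (a*v*(z/Q)) with ((a*v/Q)*z) by (field; lra).
        replace (a*K*Z/Q) with ((a*K/Q)*Z) by (field; lra).
        assert (0 < a*v/Q) by (apply Rdiv_lt_0_compat; nra).
        rewrite Rabs_mult, (Rabs_right (a*v/Q)) by lra.
        apply Rmult_le_compat; try lra. apply Rabs_pos.
        unfold Rdiv. apply Rmult_le_compat_r. left; apply Rinv_0_lt_compat; lra. nra.
      + unfold Rdiv. rewrite Rabs_mult. rewrite (Rabs_right (/ Q^3)). lra.
        left; apply Rinv_0_lt_compat, pow_lt; lra. }
    assert (Hx2 : (y + s)^2 <= eta^2).
    { rewrite <- (Rsqr_pow2 (y+s)), <- Rsqr_pow2. rewrite Rsqr_abs. apply Rsqr_incr_1; auto. apply Rabs_pos.
      eapply Rle_trans; [apply Rabs_pos|exact Hab]. }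
    assert ((y+s)^6 <= (y+s)^4 * eta^2).
    { replace ((y+s)^6) with ((y+s)^4 * (y+s)^2) by ring. apply Rmult_le_compat_l; auto. }
    assert ((y+s)^4 * eta^2 <= 8 * (y^4 + s^4) * eta^2) by (apply Rmult_le_compat_r; lra).
    lra.
  - lra.
Qed.

Lemma sumN_lin3 N (f g : nat -> R) A B C c :
  sumN N (fun i => A * (f i + c) + B * g i + C * c) = A * (sumN N f + INR N * c) + B * sumN N g + C * (INR N * c).
Proof. induction N. rewrite !sumN_0. simpl. ring. rewrite !sumN_S, IHN, S_INR. ring. Qed.

Lemma Esum_bound w N a Q r z K Z : (forall i, (i < N)%nat -> 0 < w N i) -> (1 <= N)%nat ->
  0 < a -> 1 <= Q -> Q ^ 4 = INR N -> 0 < K -> Rabs z <= Z ->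
  0 <= sumN N (fun i => Eerr (a * w N i * (z / Q) + r / Q ^ 3)) <=
  8 * (a * K * Z / Q + Rabs r / Q ^ 3) ^ 2 * (a ^ 4 * Z ^ 4 * emp_mom w N 4 + r ^ 4)
  + 8 * a ^ 4 * Z ^ 4 * (/ INR N * sumN N (fun i => ind_gt (w N i) K * w N i ^ 4))
  + 8 * (r ^ 4 / Q ^ 8).
Proof.
  intros Hpos HN Ha HQ HQ4 HK Hz. pose proof (INR_pos_N N HN).
  set (eta := a * K * Z / Q + Rabs r / Q ^ 3).
  split. { apply sumN_nonneg. intros. apply Eerr_bounds. }
  eapply Rle_trans. { apply sumN_le. intros i Hi. apply (Eerr_pt a (w N i) z Q r K Z); auto. }
  fold eta.
  assert (HQp : 0 < Q) by lra.
  assert (Hz4 : z^4 <= Z^4).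
  { replace (z^4) with ((Rabs z)^4) by (rewrite RPow_abs; rewrite Rabs_right; [auto|apply Rle_ge; replace (z^4) with ((z^2)^2) by ring; apply pow2_ge_0]).
    apply pow_incr. split; [apply Rabs_pos|auto]. }
  assert (Hs4 : 0 <= (r / Q^3)^4) by (replace ((r/Q^3)^4) with (((r/Q^3)^2)^2) by ring; apply pow2_ge_0).
  assert (HNs4' : INR N * (r / Q^3)^4 = r^4 / Q^8) by (rewrite <- HQ4; field; lra).
  assert (HNs4 : INR N * (r / Q^3)^4 <= r^4).
  { rewrite <- HQ4. replace (Q ^ 4 * (r / Q ^ 3) ^ 4) with (r^4 / Q^8) by (field; lra).
    assert (1 <= Q^8) by (apply pow_R1_Rle; lra).
    assert (0 <= r^4) by (replace (r^4) with ((r^2)^2) by ring; apply pow2_ge_0).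
    unfold Rdiv. apply Rle_trans with (r^4 * 1); [|lra]. apply Rmult_le_compat_l; auto.
    rewrite <- Rinv_1. apply Rinv_le_contravar; lra. }
  assert (Hsy : sumN N (fun i => (a * w N i * (z / Q)) ^ 4) = a^4 * z^4 * emp_mom w N 4).
  { replace (sumN N (fun i => (a * w N i * (z / Q)) ^ 4)) with (a^4 * z^4 / Q^4 * sumN N (fun i => w N i ^ 4)).
    rewrite sum_eq_mom by auto. rewrite <- HQ4. field. lra.
    rewrite <- sumN_scal. apply sumN_ext. intros. field. lra. }
  assert (Hsi : sumN N (fun i => ind_gt (w N i) K * (a * w N i * (z / Q)) ^ 4)
     = a^4 * z^4 * (/ INR N * sumN N (fun i => ind_gt (w N i) K * w N i ^ 4))).
  { rewrite <- HQ4. rewrite <- !sumN_scal. apply sumN_ext. intros. field. lra. }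
  assert (HU : 0 <= / INR N * sumN N (fun i => ind_gt (w N i) K * w N i ^ 4)).
  { apply Rmult_le_pos. left; apply Rinv_0_lt_compat; lra. apply sumN_nonneg. intros.
    apply Rmult_le_pos. apply ind_gt_01. apply pow_le. left; apply Hpos; auto. }
  assert (Hm4 : 0 <= emp_mom w N 4) by (left; apply emp_mom_pos; auto).
  assert (Ha4 : 0 <= a^4) by (apply pow_le; lra).
  replace (sumN N (fun i => 8 * eta ^ 2 * ((a * w N i * (z / Q)) ^ 4 + (r / Q ^ 3) ^ 4) +
      8 * ind_gt (w N i) K * (a * w N i * (z / Q)) ^ 4 + 8 * (r / Q ^ 3) ^ 4))
   with (8 * eta ^ 2 * (sumN N (fun i => (a * w N i * (z / Q)) ^ 4) + INR N * (r / Q ^ 3) ^ 4)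
      + 8 * sumN N (fun i => ind_gt (w N i) K * (a * w N i * (z / Q)) ^ 4) + 8 * (INR N * (r / Q ^ 3) ^ 4)).
  2:{ rewrite <- sumN_lin3. apply sumN_ext. intros. ring. }
  rewrite Hsy, Hsi.
  assert (He : 0 <= 8 * eta^2) by (pose proof (pow2_ge_0 eta); lra).
  assert (a ^ 4 * z ^ 4 * emp_mom w N 4 <= a^4 * Z^4 * emp_mom w N 4).
  { apply Rmult_le_compat_r; auto. apply Rmult_le_compat_l; auto. }
  assert (a^4 * z^4 * (/ INR N * sumN N (fun i => ind_gt (w N i) K * w N i ^ 4)) <=
          a^4 * Z^4 * (/ INR N * sumN N (fun i => ind_gt (w N i) K * w N i ^ 4))).
  { apply Rmult_le_compat_r; auto. apply Rmult_le_compat_l; auto. }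
  assert (8 * eta ^ 2 * (a ^ 4 * z ^ 4 * emp_mom w N 4 + INR N * (r / Q ^ 3) ^ 4) <=
          8 * eta ^ 2 * (a ^ 4 * Z ^ 4 * emp_mom w N 4 + r ^ 4)) by (apply Rmult_le_compat_l; lra).
  lra.
Qed.

Definition LN w N r z := - INR N * G w N (beta_c w N) (3 / 4) (z / Rpower (INR N) (1 / 4)) r.

Lemma LN_formula w N r z : (forall i, (i < N)%nat -> 0 < w N i) -> (1 <= N)%nat ->
  let Q := Rpower (INR N) (1/4) in let a := / sqrt (emp_mom w N 2) in
  LN w N r z = sumN N (fun i => ln (cosh (a * w N i * (z / Q) + r / Q ^ 3))) - INR N * (z / Q) ^ 2 / 2.
Proof.
  intros Hp HN Q a. pose proof (INR_pos_N N HN).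
  destruct (Q_facts N HN) as [HQ [HQ1 [HQ4 HQ3]]].
  unfold LN, G. rewrite alpha_eq by auto. rewrite HQ3. fold Q. fold a. field. unfold Q; split; lra.
Qed.

Lemma a_facts w N : (forall i, (i < N)%nat -> 0 < w N i) -> (1 <= N)%nat ->
  let a := / sqrt (emp_mom w N 2) in 0 < a /\ a ^ 2 * emp_mom w N 2 = 1 /\ a * emp_mom w N 1 <= 1.
Proof.
  intros Hp HN a. pose proof (emp_mom_pos w N 2 Hp HN). pose proof (emp_mom_pos w N 1 Hp HN).
  pose proof (sqrt_lt_R0 _ H). pose proof (sqrt_sqrt (emp_mom w N 2) ltac:(lra)).
  assert (Ha : 0 < a) by (apply Rinv_0_lt_compat; auto).
  split; auto. split.
  - unfold a. rewrite <- H2 at 2. field. lra.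
  - pose proof (mom_CS w N HN).
    assert (emp_mom w N 1 <= sqrt (emp_mom w N 2)).
    { rewrite <- (sqrt_pow2 (emp_mom w N 1)) by lra. apply sqrt_le_1_alt. auto. }
    unfold a. apply Rmult_le_reg_l with (sqrt (emp_mom w N 2)); auto.
    rewrite <- Rmult_assoc, Rinv_r by lra. lra.
Qed.

Lemma cv_am1 w EW EW2 : (forall N i, (i < N)%nat -> 0 < w N i) -> 0 < EW2 ->
  Un_cv (fun N => emp_mom w N 1) EW -> Un_cv (fun N => emp_mom w N 2) EW2 ->
  Un_cv (fun N => / sqrt (emp_mom w N 2) * emp_mom w N 1) (EW / sqrt EW2).
Proof.
  intros Hp H2 C1 C2. unfold Rdiv. rewrite Rmult_comm.
  apply CV_mult; auto.
  apply (continuity_seq (fun x => / sqrt x)); auto.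
  apply continuity_pt_inv. apply continuity_pt_sqrt. lra.
  apply Rgt_not_eq. apply sqrt_lt_R0. auto.
Qed.

Lemma cv_a4m4 w EW2 EW4 : (forall N i, (i < N)%nat -> 0 < w N i) -> 0 < EW2 ->
  Un_cv (fun N => emp_mom w N 2) EW2 -> Un_cv (fun N => emp_mom w N 4) EW4 ->
  Un_cv (fun N => (/ sqrt (emp_mom w N 2)) ^ 4 * emp_mom w N 4) (EW4 / EW2 ^ 2).
Proof.
  intros Hp H2 C2 C4. unfold Rdiv. rewrite Rmult_comm.
  apply CV_mult; auto.
  replace (/ EW2 ^ 2) with ((fun x => (/ sqrt x) ^ 4) EW2).
  2:{ cbv beta. pose proof (sqrt_sqrt EW2 ltac:(lra)). pose proof (sqrt_lt_R0 _ H2).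
      replace (EW2 ^ 2) with ((sqrt EW2 * sqrt EW2)^2) by (rewrite H; auto). field. lra. }
  apply (continuity_seq (fun x => (/ sqrt x) ^ 4)); auto.
  apply (continuity_pt_comp (fun x => / sqrt x) (fun y => y ^ 4)).
  apply continuity_pt_inv. apply continuity_pt_sqrt. lra.
  apply Rgt_not_eq. apply sqrt_lt_R0. auto.
  apply derivable_continuous_pt. apply derivable_pt_pow.
Qed.

Lemma abs_pow_le z Z k : Rabs z <= Z -> Rabs (z ^ k) <= Z ^ k.
Proof. intros H. rewrite <- RPow_abs. apply pow_incr. split; [apply Rabs_pos|auto]. Qed.

Lemma T3_core (t1 t2 t3 t4 b1 b2 b3 b4 q r : R) : 0 < q <= 1 ->
  Rabs t1 <= b1 -> Rabs t2 <= b2 -> Rabs t3 <= b3 -> Rabs t4 <= b4 ->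
  Rabs (q * (r ^ 2 / 2 - / 12 * (t1 + t2 + t3 + t4))) <= q * (r ^ 2 / 2 + / 12 * (b1 + b2 + b3 + b4)).
Proof.
  intros Hq H1 H2 H3 H4.
  rewrite Rabs_mult, (Rabs_right q) by lra. apply Rmult_le_compat_l; [lra|].
  assert (Hr2 : 0 <= r^2) by apply pow2_ge_0.
  apply Rabs_le_between in H1; apply Rabs_le_between in H2;
    apply Rabs_le_between in H3; apply Rabs_le_between in H4.
  apply Rabs_le. split; lra.
Qed.

Lemma T3_bound (a3m3 am1 r z Z Q P : R) : 0 <= a3m3 <= P -> 0 <= am1 <= 1 -> Rabs z <= Z -> 1 <= Q ->
  Rabs (r ^ 2 / (2 * Q ^ 2) - / 12 * (4 * a3m3 * r * z ^ 3 / Q ^ 2 + 6 * r ^ 2 * z ^ 2 / Q ^ 4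
        + 4 * am1 * r ^ 3 * z / Q ^ 6 + r ^ 4 / Q ^ 8))
  <= (r ^ 2 / 2 + / 12 * (4 * P * Rabs r * Z ^ 3 + 6 * r ^ 2 * Z ^ 2 + 4 * Rabs r ^ 3 * Z + r ^ 4)) / Q ^ 2.
Proof.
  intros HP Ham Hz HQ.
  assert (Hq : 0 < / Q ^ 2 <= 1).
  { assert (1 <= Q^2) by (apply pow_R1_Rle; lra). split. apply Rinv_0_lt_compat; lra.
    rewrite <- Rinv_1. apply Rinv_le_contravar; lra. }
  assert (HZ : 0 <= Z) by (pose proof (Rabs_pos z); lra).
  assert (E1 : r ^ 2 / (2 * Q ^ 2) - / 12 * (4 * a3m3 * r * z ^ 3 / Q ^ 2 + 6 * r ^ 2 * z ^ 2 / Q ^ 4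
        + 4 * am1 * r ^ 3 * z / Q ^ 6 + r ^ 4 / Q ^ 8) =
     / Q ^ 2 * (r ^ 2 / 2 - / 12 * (4 * a3m3 * r * z ^ 3 + 6 * r ^ 2 * z ^ 2 * / Q ^ 2
        + 4 * am1 * r ^ 3 * z * (/ Q ^ 2)^2 + r^4 * (/ Q^2)^3))) by (field; lra).
  assert (E2 : (r ^ 2 / 2 + / 12 * (4 * P * Rabs r * Z ^ 3 + 6 * r ^ 2 * Z ^ 2 + 4 * Rabs r ^ 3 * Z + r ^ 4)) / Q ^ 2
     = / Q ^ 2 * (r ^ 2 / 2 + / 12 * (4 * P * Rabs r * Z ^ 3 + 6 * r ^ 2 * Z ^ 2 + 4 * Rabs r ^ 3 * Z + r ^ 4)))
    by (field; lra).
  rewrite E1, E2. apply T3_core; auto.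
  - rewrite !Rabs_mult. rewrite (Rabs_right 4) by lra. rewrite (Rabs_right a3m3) by lra.
    pose proof (abs_pow_le z Z 3 Hz). pose proof (Rabs_pos r). pose proof (Rabs_pos (z^3)).
    apply Rmult_le_compat; try nra.
  - rewrite !Rabs_mult. rewrite (Rabs_right 6) by lra. rewrite (Rabs_right (/ Q^2)) by lra.
    rewrite (Rabs_right (r^2)) by (apply Rle_ge, pow2_ge_0).
    pose proof (abs_pow_le z Z 2 Hz). pose proof (pow2_ge_0 r). pose proof (Rabs_pos (z^2)).
    apply Rle_trans with (6 * r^2 * Z^2 * 1); [|lra].
    apply Rmult_le_compat; try nra.
  - rewrite !Rabs_mult. rewrite (Rabs_right 4) by lra. rewrite (Rabs_right am1) by lra.
    rewrite (Rabs_right ((/ Q ^ 2)^2)) by (apply Rle_ge, pow2_ge_0). rewrite <- RPow_abs.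
    assert ((/ Q ^ 2)^2 <= 1) by (rewrite <- (pow1 2); apply pow_incr; lra). pose proof (pow2_ge_0 (/ Q ^ 2)).
    pose proof (Rabs_pos r). assert (0 <= Rabs r ^ 3) by (apply pow_le; lra). pose proof (Rabs_pos z).
    apply Rle_trans with (4 * 1 * Rabs r ^ 3 * Z * 1); [|lra].
    repeat (apply Rmult_le_compat; try nra). repeat apply Rmult_le_pos; lra.
  - rewrite Rabs_mult. rewrite (Rabs_right (r^4)) by (apply Rle_ge; replace (r^4) with ((r^2)^2) by ring; apply pow2_ge_0).
    rewrite (Rabs_right ((/ Q ^ 2)^3)) by (apply Rle_ge, pow_le; lra).
    assert ((/ Q ^ 2)^3 <= 1) by (rewrite <- (pow1 3); apply pow_incr; lra). assert (0 <= r^4) by (replace (r^4) with ((r^2)^2) by ring; apply pow2_ge_0).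
    nra.
Qed.

Lemma m3_le w N : (forall i, (i < N)%nat -> 0 < w N i) -> (1 <= N)%nat ->
  emp_mom w N 3 <= emp_mom w N 2 + emp_mom w N 4.
Proof.
  intros Hp HN. pose proof (INR_pos_N N HN). unfold emp_mom.
  rewrite <- Rmult_plus_distr_l, <- sumN_plus. apply Rmult_le_compat_l.
  left; apply Rinv_0_lt_compat; lra. apply sumN_le. intros i Hi. pose proof (Hp i Hi).
  set (v := w N i) in *. simpl. destruct (Rle_dec v 1).
  - assert (v * (v * (v * 1)) <= v * (v * 1)) by (apply Rmult_le_compat_l; [lra|]; nra).
    assert (0 <= v * (v * (v * (v * 1)))) by (repeat apply Rmult_le_pos; lra). lra.
  - assert (0 <= v * (v * (v * 1))) by (repeat apply Rmult_le_pos; lra).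
    assert (v * (v * (v * 1)) <= v * (v * (v * (v * 1)))) by nra.
    assert (0 <= v * (v * 1)) by (repeat apply Rmult_le_pos; lra). lra.
Qed.

Lemma inv_pow_le Q k : 1 <= Q -> (2 <= k)%nat -> / Q ^ k <= / Q ^ 2.
Proof.
  intros HQ Hk. apply Rinv_le_contravar. apply pow_lt; lra.
  replace k with (2 + (k - 2))%nat by lia. rewrite pow_add.
  assert (1 <= Q ^ (k - 2)) by (apply pow_R1_Rle; lra). assert (0 < Q^2) by (apply pow_lt; lra). nra.
Qed.

Lemma eventually_cv (u : nat -> R) l e : Un_cv u l -> 0 < e -> exists N0, forall N, (N0 <= N)%nat -> Rabs (u N - l) <= e.
Proof. intros H He. destruct (H e He) as [N0 HN0]. exists N0. intros N HN. left. apply HN0. lia. Qed.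

Lemma big_nat X : exists n : nat, X <= INR n.
Proof.
  destruct (Rle_dec X 0). exists 0%nat. simpl; lra.
  destruct (nfloor_ex X ltac:(lra)) as [k Hk]. exists (S k). rewrite S_INR. lra.
Qed.

Lemma LN_cv w r EW EW2 EW4 : (forall N i, (i < N)%nat -> 0 < w N i) -> 0 < EW2 ->
  Un_cv (fun N => emp_mom w N 1) EW -> Un_cv (fun N => emp_mom w N 2) EW2 ->
  Un_cv (fun N => emp_mom w N 4) EW4 ->
  (forall eps, 0 < eps -> exists K, 0 < K /\ exists N0, forall N, (N0 <= N)%nat -> (1 <= N)%nat ->
    / INR N * sumN N (fun i => ind_gt (w N i) K * w N i ^ 4) <= eps) ->
  forall Z, 0 <= Z -> forall eps, 0 < eps -> exists N0, forall N, (N0 <= N)%nat -> forall z, Rabs z <= Z ->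
    Rabs (LN w N r z - (z * r * (EW / sqrt EW2) - / 12 * (EW4 / EW2 ^ 2) * z ^ 4)) <= eps.
Proof.
  intros Hpos HE2 C1 C2 Cv4 UI Z HZ eps Heps.
  set (e := eps / 5).
  assert (He : 0 < e) by (unfold e; lra).
  set (amax := / sqrt (EW2 / 2)).
  assert (Hamax : 0 < amax) by (apply Rinv_0_lt_compat, sqrt_lt_R0; lra).
  set (M3 := EW2 + EW4 + 2).
  assert (HEW4 : -1 <= EW4).
  { destruct (eventually_cv _ _ 1 Cv4 ltac:(lra)) as [N4 HN4].
    specialize (HN4 (max 1 N4) ltac:(lia)). pose proof (emp_mom_pos w (max 1 N4) 4 (Hpos _) ltac:(lia)).
    apply Rabs_le_between in HN4. lra. }
  set (P := amax ^ 3 * M3).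
  set (C3 := r ^ 2 / 2 + / 12 * (4 * P * Rabs r * Z ^ 3 + 6 * r ^ 2 * Z ^ 2 + 4 * Rabs r ^ 3 * Z + r ^ 4)).
  assert (HZ4 : 0 <= Z ^ 4) by (apply pow_le; lra).
  assert (Ham4 : 0 <= amax ^ 4) by (apply pow_le; lra).
  destruct (UI (e / (8 * amax ^ 4 * Z ^ 4 + 1)) ltac:(apply Rdiv_lt_0_compat; nra)) as [K [HK [NU HNU]]].
  set (CC4 := 8 * (amax * K * Z + Rabs r) ^ 2 * (amax ^ 4 * Z ^ 4 * (EW4 + 1) + r ^ 4)).
  assert (Hr4 : 0 <= r ^ 4) by (replace (r^4) with ((r^2)^2) by ring; apply pow2_ge_0).
  assert (HCC4 : 0 <= CC4).
  { unfold CC4. apply Rmult_le_pos. pose proof (pow2_ge_0 (amax * K * Z + Rabs r)); lra.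
    assert (0 <= amax ^ 4 * Z ^ 4 * (EW4 + 1)) by (apply Rmult_le_pos; [apply Rmult_le_pos; lra|lra]). lra. }
  set (X := (Rabs C3 + CC4 + 8 * r ^ 4 + 1) / e).
  destruct (big_nat (X ^ 2)) as [NQ HNQ].
  destruct (eventually_cv _ _ (Rmin (EW2 / 2) 1) C2) as [N2 HN2].
  { apply Rmin_pos; lra. }
  destruct (eventually_cv _ _ 1 Cv4 ltac:(lra)) as [N4 HN4].
  destruct (eventually_cv _ _ (e / (Rabs r * Z + 1)) (cv_am1 w EW EW2 Hpos HE2 C1 C2)) as [NA HNA].
  { apply Rdiv_lt_0_compat; [lra|]. pose proof (Rabs_pos r). nra. }
  destruct (eventually_cv _ _ (12 * e / (Z ^ 4 + 1)) (cv_a4m4 w EW2 EW4 Hpos HE2 C2 Cv4)) as [NB HNB].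
  { apply Rdiv_lt_0_compat; lra. }
  exists (max 1 (max NU (max NQ (max N2 (max N4 (max NA NB)))))).
  intros N HN z Hz.
  assert (HN1 : (1 <= N)%nat) by lia.
  specialize (HNU N ltac:(lia) HN1). specialize (HN2 N ltac:(lia)). specialize (HN4 N ltac:(lia)).
  specialize (HNA N ltac:(lia)). specialize (HNB N ltac:(lia)).
  assert (HNQ' : X ^ 2 <= INR N) by (apply Rle_trans with (INR NQ); auto; apply le_INR; lia).
  destruct (Q_facts N HN1) as [HQ [HQ1 [HQ4 HQ3]]].
  set (Q := Rpower (INR N) (1/4)) in *.
  destruct (a_facts w N (Hpos N) HN1) as [Ha [Ha2 Ham1]].
  set (a := / sqrt (emp_mom w N 2)) in *.
  rewrite LN_formula by auto. fold Q. fold a.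
  rewrite (L_decomp w N a Q r z HN1 HQ HQ4 Ha Ha2).
  pose proof (emp_mom_pos w N 1 (Hpos N) HN1) as Hm1.
  pose proof (emp_mom_pos w N 2 (Hpos N) HN1) as Hm2.
  pose proof (emp_mom_pos w N 3 (Hpos N) HN1) as Hm3.
  pose proof (emp_mom_pos w N 4 (Hpos N) HN1) as Hm4.
  pose proof (m3_le w N (Hpos N) HN1) as Hm3le.
  assert (Hmin1 : Rmin (EW2 / 2) 1 <= EW2 / 2) by apply Rmin_l.
  assert (Hmin2 : Rmin (EW2 / 2) 1 <= 1) by apply Rmin_r.
  apply Rabs_le_between in HN2. apply Rabs_le_between in HN4.
  assert (Haa : a <= amax).
  { unfold a, amax. apply Rinv_le_contravar. apply sqrt_lt_R0; lra. apply sqrt_le_1_alt. lra. }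
  assert (HP : 0 <= a ^ 3 * emp_mom w N 3 <= P).
  { split. apply Rmult_le_pos; [apply pow_le|]; lra. unfold P, M3.
    apply Rmult_le_compat. apply pow_le; lra. lra. apply pow_incr; lra. lra. }
  assert (HT3 := T3_bound (a ^ 3 * emp_mom w N 3) (a * emp_mom w N 1) r z Z Q P HP
     ltac:(split; [apply Rmult_le_pos; lra|auto]) Hz HQ1).
  fold C3 in HT3.
  assert (HT4 := Esum_bound w N a Q r z K Z (Hpos N) HN1 Ha HQ1 HQ4 HK Hz).
  set (U := / INR N * sumN N (fun i => ind_gt (w N i) K * w N i ^ 4)) in *.
  set (SE := sumN N (fun i => Eerr (a * w N i * (z / Q) + r / Q ^ 3))) in *.
  assert (HU0 : 0 <= U).
  { unfold U. apply Rmult_le_pos. left; apply Rinv_0_lt_compat, INR_pos_N; auto. apply sumN_nonneg. intros.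
    apply Rmult_le_pos. apply ind_gt_01. apply pow_le. left; apply Hpos; auto. }
  assert (HQ2 : 0 < Q ^ 2) by (apply pow_lt; lra).
  assert (Hiq : / Q ^ 2 <= e / (Rabs C3 + CC4 + 8 * r ^ 4 + 1)).
  { assert (HX : 0 < X) by (unfold X; apply Rdiv_lt_0_compat; [pose proof (Rabs_pos C3); lra|lra]).
    assert (X <= Q ^ 2).
    { apply Rsqr_incr_0_var. unfold Rsqr. replace (Q^2 * Q^2) with (Q^4) by ring. rewrite HQ4.
      simpl in HNQ'. lra. lra. }
    replace (e / (Rabs C3 + CC4 + 8 * r ^ 4 + 1)) with (/ X).
    apply Rinv_le_contravar; auto. unfold X. field. pose proof (Rabs_pos C3); lra. }
  assert (HSQ : (Rabs C3 + CC4 + 8 * r ^ 4) / Q ^ 2 <= e).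
  { unfold Rdiv. apply Rle_trans with ((Rabs C3 + CC4 + 8 * r ^ 4) * (e / (Rabs C3 + CC4 + 8 * r ^ 4 + 1))).
    apply Rmult_le_compat_l; auto. pose proof (Rabs_pos C3); lra.
    replace ((Rabs C3 + CC4 + 8 * r ^ 4) * (e / (Rabs C3 + CC4 + 8 * r ^ 4 + 1))) with
      (e * ((Rabs C3 + CC4 + 8 * r ^ 4) / (Rabs C3 + CC4 + 8 * r ^ 4 + 1))) by (field; pose proof (Rabs_pos C3); lra).
    assert ((Rabs C3 + CC4 + 8 * r ^ 4) / (Rabs C3 + CC4 + 8 * r ^ 4 + 1) <= 1).
    { pose proof (Rabs_pos C3). apply Rmult_le_reg_r with (Rabs C3 + CC4 + 8 * r ^ 4 + 1). lra.
      unfold Rdiv. rewrite Rmult_assoc, Rinv_l by lra. lra. }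
    nra. }
  assert (Heta : 8 * (a * K * Z / Q + Rabs r / Q ^ 3) ^ 2 * (a ^ 4 * Z ^ 4 * emp_mom w N 4 + r ^ 4) <= CC4 / Q ^ 2).
  { assert (H0e : 0 <= a * K * Z / Q + Rabs r / Q ^ 3).
    { pose proof (Rabs_pos r). assert (0 <= a * K * Z) by (apply Rmult_le_pos; [apply Rmult_le_pos|]; lra).
      assert (0 < Q^3) by (apply pow_lt; lra). apply Rplus_le_le_0_compat; apply Rdiv_le_0_compat; lra. }
    assert (H1e : a * K * Z / Q + Rabs r / Q ^ 3 <= (amax * K * Z + Rabs r) / Q).
    { assert (Rabs r / Q ^ 3 <= Rabs r / Q).
      { unfold Rdiv. apply Rmult_le_compat_l. apply Rabs_pos. apply Rinv_le_contravar. lra.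
        replace (Q^3) with (Q * Q^2) by ring. assert (1 <= Q^2) by (apply pow_R1_Rle; lra). nra. }
      assert (a * K * Z / Q <= amax * K * Z / Q).
      { unfold Rdiv. apply Rmult_le_compat_r. left; apply Rinv_0_lt_compat; lra.
        apply Rmult_le_compat_r; auto. apply Rmult_le_compat_r; lra. }
      unfold Rdiv in *. lra. }
    assert (H2e : (a * K * Z / Q + Rabs r / Q ^ 3) ^ 2 <= (amax * K * Z + Rabs r) ^ 2 / Q ^ 2).
    { replace ((amax * K * Z + Rabs r) ^ 2 / Q ^ 2) with (((amax * K * Z + Rabs r) / Q) ^ 2) by (field; lra).
      apply pow_incr. lra. }
    assert (H3e : a ^ 4 * Z ^ 4 * emp_mom w N 4 + r ^ 4 <= amax ^ 4 * Z ^ 4 * (EW4 + 1) + r ^ 4).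
    { assert (a^4 <= amax^4) by (apply pow_incr; lra).
      assert (0 <= a^4) by (apply pow_le; lra).
      assert (a ^ 4 * Z ^ 4 <= amax ^ 4 * Z ^ 4) by (apply Rmult_le_compat_r; lra).
      assert (0 <= a ^ 4 * Z ^ 4) by (apply Rmult_le_pos; lra).
      apply Rplus_le_compat_r. apply Rmult_le_compat; lra. }
    unfold CC4. replace (8 * (amax * K * Z + Rabs r) ^ 2 * (amax ^ 4 * Z ^ 4 * (EW4 + 1) + r ^ 4) / Q ^ 2)
      with (8 * ((amax * K * Z + Rabs r) ^ 2 / Q ^ 2) * (amax ^ 4 * Z ^ 4 * (EW4 + 1) + r ^ 4)) by (field; lra).
    apply Rmult_le_compat. apply Rmult_le_pos; [lra|apply pow2_ge_0].
    apply Rplus_le_le_0_compat; [|auto]. apply Rmult_le_pos; [apply Rmult_le_pos; [apply pow_le|]|]; lra.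
    apply Rmult_le_compat_l; lra. auto. }
  assert (HUe : 8 * a ^ 4 * Z ^ 4 * U <= e).
  { assert (a^4 <= amax^4) by (apply pow_incr; lra). assert (0 <= a^4) by (apply pow_le; lra).
    apply Rle_trans with (8 * amax ^ 4 * Z ^ 4 * (e / (8 * amax ^ 4 * Z ^ 4 + 1))).
    - apply Rmult_le_compat; auto. apply Rmult_le_pos; [|lra]. apply Rmult_le_pos; lra.
      apply Rmult_le_compat_r; [lra|]. apply Rmult_le_compat_l; lra.
    - replace (8 * amax ^ 4 * Z ^ 4 * (e / (8 * amax ^ 4 * Z ^ 4 + 1))) with
        (e * (8 * amax ^ 4 * Z ^ 4 / (8 * amax ^ 4 * Z ^ 4 + 1))) by (field; nra).
      assert (8 * amax ^ 4 * Z ^ 4 / (8 * amax ^ 4 * Z ^ 4 + 1) <= 1).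
      { apply Rmult_le_reg_r with (8 * amax ^ 4 * Z ^ 4 + 1). nra.
        unfold Rdiv. rewrite Rmult_assoc, Rinv_l by nra. nra. }
      nra. }
  assert (Hr8 : 8 * (r ^ 4 / Q ^ 8) <= 8 * r ^ 4 / Q ^ 2).
  { unfold Rdiv. rewrite Rmult_assoc. apply Rmult_le_compat_l; [lra|]. apply Rmult_le_compat_l; auto.
    apply inv_pow_le; [auto|lia]. }
  assert (HT1 : Rabs (r * z * (a * emp_mom w N 1 - EW / sqrt EW2)) <= e).
  { rewrite !Rabs_mult. unfold a in HNA |- *.
    apply Rle_trans with (Rabs r * Z * (e / (Rabs r * Z + 1))).
    apply Rmult_le_compat. apply Rmult_le_pos; apply Rabs_pos. apply Rabs_pos.
    apply Rmult_le_compat_l; auto. apply Rabs_pos. auto.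
    replace (Rabs r * Z * (e / (Rabs r * Z + 1))) with (e * (Rabs r * Z / (Rabs r * Z + 1))) by (field; pose proof (Rabs_pos r); nra).
    assert (Rabs r * Z / (Rabs r * Z + 1) <= 1).
    { pose proof (Rabs_pos r). apply Rmult_le_reg_r with (Rabs r * Z + 1). nra.
      unfold Rdiv. rewrite Rmult_assoc, Rinv_l by nra. nra. }
    nra. }
  assert (HT2 : Rabs (/ 12 * (a ^ 4 * emp_mom w N 4 - EW4 / EW2 ^ 2) * z ^ 4) <= e).
  { rewrite !Rabs_mult. rewrite (Rabs_right (/12)) by lra. unfold a in HNB |- *.
    pose proof (abs_pow_le z Z 4 Hz).
    apply Rle_trans with (/ 12 * (12 * e / (Z ^ 4 + 1)) * Z ^ 4).
    apply Rmult_le_compat. apply Rmult_le_pos. lra. apply Rabs_pos. apply Rabs_pos.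
    apply Rmult_le_compat_l; auto. lra. auto.
    replace (/ 12 * (12 * e / (Z ^ 4 + 1)) * Z ^ 4) with (e * (Z ^ 4 / (Z ^ 4 + 1))) by (field; lra).
    assert (Z ^ 4 / (Z ^ 4 + 1) <= 1).
    { apply Rmult_le_reg_r with (Z ^ 4 + 1). lra. unfold Rdiv. rewrite Rmult_assoc, Rinv_l by lra. lra. }
    nra. }
  set (T3 := r ^ 2 / (2 * Q ^ 2) - / 12 * (4 * (a ^ 3 * emp_mom w N 3) * r * z ^ 3 / Q ^ 2 +
          6 * r ^ 2 * z ^ 2 / Q ^ 4 + 4 * (a * emp_mom w N 1) * r ^ 3 * z / Q ^ 6 + r ^ 4 / Q ^ 8)) in *.
  replace (r * z * (a * emp_mom w N 1) + r ^ 2 / (2 * Q ^ 2) -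
     / 12 * (a ^ 4 * emp_mom w N 4 * z ^ 4 + 4 * (a ^ 3 * emp_mom w N 3) * r * z ^ 3 / Q ^ 2 +
       6 * r ^ 2 * z ^ 2 / Q ^ 4 + 4 * (a * emp_mom w N 1) * r ^ 3 * z / Q ^ 6 + r ^ 4 / Q ^ 8) + SE -
     (z * r * (EW / sqrt EW2) - / 12 * (EW4 / EW2 ^ 2) * z ^ 4))
   with (r * z * (a * emp_mom w N 1 - EW / sqrt EW2) - / 12 * (a ^ 4 * emp_mom w N 4 - EW4 / EW2 ^ 2) * z ^ 4
         + T3 + SE) by (unfold T3; ring).
  assert (HC3 : Rabs T3 <= Rabs C3 / Q ^ 2).
  { eapply Rle_trans; [exact HT3|]. unfold Rdiv. apply Rmult_le_compat_r. left; apply Rinv_0_lt_compat; lra. apply Rle_abs. }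
  apply Rabs_le_between in HT1. apply Rabs_le_between in HT2. apply Rabs_le_between in HC3.
  assert (CC4 / Q ^ 2 + Rabs C3 / Q ^ 2 + 8 * r ^ 4 / Q ^ 2 <= e).
  { replace (CC4 / Q ^ 2 + Rabs C3 / Q ^ 2 + 8 * r ^ 4 / Q ^ 2) with ((Rabs C3 + CC4 + 8 * r ^ 4) / Q ^ 2) by (field; lra). auto. }
  apply Rabs_le. unfold e in *. lra.
Qed.



Lemma ex_derive_sumN N (g : nat -> R -> R) x : (forall i, ex_derive (g i) x) ->
  ex_derive (fun z => sumN N (fun i => g i z)) x.
Proof.
  intros H. induction N.
  - apply (ex_derive_ext (fun _ => 0)). intros; rewrite sumN_0; auto. apply ex_derive_const.
  - apply (ex_derive_ext (fun z => sumN N (fun i => g i z) + g N z)). intros; rewrite sumN_S; auto.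
    apply (ex_derive_plus (fun z => sumN N (fun i => g i z)) (g N)); auto.
Qed.

Lemma ex_derive_lncosh_aff c d x : ex_derive (fun z => ln (cosh (c * z + d))) x.
Proof.
  eexists. apply (is_derive_comp (fun y => ln (cosh y)) (fun z => c * z + d)).
  apply is_derive_lncosh. auto_derive; auto.
Qed.

Lemma fn_continuous w N r x : (forall i, (i < N)%nat -> 0 < w N i) -> (1 <= N)%nat ->
  continuous (fun z => exp (LN w N r z)) x.
Proof.
  intros Hp HN.
  set (Q := Rpower (INR N) (1/4)). set (a := / sqrt (emp_mom w N 2)).
  apply (continuous_ext (fun z => exp (sumN N (fun i => ln (cosh (a * w N i * (z / Q) + r / Q ^ 3))) - INR N * (z / Q) ^ 2 / 2))).
  { intros z. rewrite LN_formula by auto. reflexivity. }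
  apply (ex_derive_continuous (fun z => exp (sumN N (fun i => ln (cosh (a * w N i * (z / Q) + r / Q ^ 3))) - INR N * (z / Q) ^ 2 / 2))).
  destruct (ex_derive_sumN N (fun i z => ln (cosh (a * w N i * (z / Q) + r / Q ^ 3))) x) as [d Hd].
  { intros i. eapply ex_derive_ext. 2: apply (ex_derive_lncosh_aff (a * w N i / Q) (r / Q ^ 3) x).
    intros t. simpl. f_equal. f_equal. unfold Rdiv. ring. }
  eexists. apply (is_derive_comp exp (fun z => sumN N (fun i => ln (cosh (a * w N i * (z / Q) + r / Q ^ 3))) - INR N * (z / Q) ^ 2 / 2)).
  apply is_derive_exp.
  apply (is_derive_minus (fun z => sumN N (fun i => ln (cosh (a * w N i * (z / Q) + r / Q ^ 3)))) (fun z => INR N * (z / Q) ^ 2 / 2)).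
  exact Hd. auto_derive; auto.
Qed.

Lemma tanh_abs y : Rabs (tanh y) <= Rabs y.
Proof.
  destruct (Rle_dec 0 y).
  - pose proof (tanh_le y r). pose proof (tanh_nonneg y r). rewrite !Rabs_right; lra.
  - pose proof (tanh_le (- y) ltac:(lra)). pose proof (tanh_nonneg (- y) ltac:(lra)).
    rewrite tanh_odd in *. rewrite (Rabs_left1 (tanh y)) by lra. rewrite (Rabs_left y) by lra. lra.
Qed.

Lemma LN_upper w N r z : (forall i, (i < N)%nat -> 0 < w N i) -> (1 <= N)%nat ->
  let Q := Rpower (INR N) (1/4) in let a := / sqrt (emp_mom w N 2) in
  LN w N r z <= r ^ 2 + Rabs r * Rabs z
     - / 20 * sumN N (fun i => Rmin ((a * w N i * (z / Q)) ^ 4) ((a * w N i * (z / Q)) ^ 2)).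
Proof.
  intros Hp HN Q a. pose proof (INR_pos_N N HN).
  destruct (Q_facts N HN) as [HQ [HQ1 [HQ4 HQ3]]]. fold Q in HQ, HQ1, HQ4, HQ3.
  destruct (a_facts w N Hp HN) as [Ha [Ha2 Ham1]]. fold a in Ha, Ha2, Ham1.
  pose proof (emp_mom_pos w N 1 Hp HN) as Hm1.
  rewrite LN_formula by auto. fold Q a.
  set (s := r / Q ^ 3). set (y := fun i => a * w N i * (z / Q)).
  assert (Hpt : forall i, (i < N)%nat -> ln (cosh (a * w N i * (z / Q) + s)) <=
     y i ^ 2 / 2 - / 20 * Rmin (y i ^ 4) (y i ^ 2) + Rabs s * Rabs (y i) + s ^ 2).
  { intros i Hi. pose proof (lncosh_shift (y i) s). pose proof (lncosh_strict (y i)).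
    assert (s * tanh (y i) <= Rabs s * Rabs (y i)).
    { eapply Rle_trans. apply Rle_abs. rewrite Rabs_mult. apply Rmult_le_compat_l. apply Rabs_pos. apply tanh_abs. }
    unfold y in *. lra. }
  eapply Rle_trans. { apply Rplus_le_compat_r. apply sumN_le. exact Hpt. }
  replace (sumN N (fun i => y i ^ 2 / 2 - / 20 * Rmin (y i ^ 4) (y i ^ 2) + Rabs s * Rabs (y i) + s ^ 2))
    with (/ 2 * sumN N (fun i => y i ^ 2) + (- / 20) * sumN N (fun i => Rmin (y i ^ 4) (y i ^ 2))
          + Rabs s * sumN N (fun i => Rabs (y i)) + INR N * s ^ 2).
  2:{ rewrite <- !sumN_scal, <- sumN_const, <- !sumN_plus. apply sumN_ext. intros. cbv beta. field. }
  assert (Hy2 : sumN N (fun i => y i ^ 2) = INR N * (z / Q) ^ 2).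
  { unfold y. replace (sumN N (fun i => (a * w N i * (z / Q)) ^ 2)) with (a^2 * (z/Q)^2 * sumN N (fun i => w N i ^ 2)).
    rewrite sum_eq_mom by auto. replace (a ^ 2 * (z / Q) ^ 2 * (INR N * emp_mom w N 2)) with
      ((a^2 * emp_mom w N 2) * INR N * (z/Q)^2) by ring. rewrite Ha2. ring.
    rewrite <- sumN_scal. apply sumN_ext. intros. ring. }
  assert (Hy1 : Rabs s * sumN N (fun i => Rabs (y i)) <= Rabs r * Rabs z).
  { unfold y. replace (sumN N (fun i => Rabs (a * w N i * (z / Q)))) with (a * Rabs z / Q * sumN N (fun i => w N i ^ 1)).
    - rewrite sum_eq_mom by auto. unfold s. unfold Rdiv. rewrite Rabs_mult, (Rabs_right (/ Q^3)).
      2:{ left; apply Rinv_0_lt_compat, pow_lt; lra. }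
      rewrite <- HQ4.
      replace (Rabs r * / Q ^ 3 * (a * Rabs z * / Q * (Q ^ 4 * emp_mom w N 1)))
        with (Rabs r * Rabs z * (a * emp_mom w N 1)) by (field; lra).
      pose proof (Rabs_pos r). pose proof (Rabs_pos z).
      assert (0 <= Rabs r * Rabs z) by nra. nra.
    - rewrite <- sumN_scal. apply sumN_ext. intros i Hi. pose proof (Hp i Hi).
      rewrite !Rabs_mult. unfold Rdiv. rewrite Rabs_mult. rewrite (Rabs_right a) by lra.
      rewrite (Rabs_right (w N i)) by lra. rewrite (Rabs_right (/ Q)) by (left; apply Rinv_0_lt_compat; lra).
      ring. }
  assert (Hs2 : INR N * s ^ 2 <= r ^ 2).
  { unfold s. rewrite <- HQ4. replace (Q ^ 4 * (r / Q ^ 3) ^ 2) with (r ^ 2 / Q ^ 2) by (field; lra).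
    assert (1 <= Q^2) by (apply pow_R1_Rle; lra). pose proof (pow2_ge_0 r).
    unfold Rdiv. apply Rle_trans with (r^2 * 1); [|lra]. apply Rmult_le_compat_l; auto.
    rewrite <- Rinv_1. apply Rinv_le_contravar; lra. }
  rewrite Hy2. replace (sumN N (fun i => Rmin ((a * w N i * (z / Q)) ^ 4) ((a * w N i * (z / Q)) ^ 2))) with (sumN N (fun i => Rmin (y i ^ 4) (y i ^ 2))) by reflexivity. lra.
Qed.

Lemma rmin_mono u v : u ^ 2 <= v ^ 2 -> Rmin (u ^ 4) (u ^ 2) <= Rmin (v ^ 4) (v ^ 2).
Proof.
  intros H. assert (0 <= u^2) by apply pow2_ge_0.
  assert (u^4 <= v^4).
  { replace (u^4) with ((u^2)^2) by ring. replace (v^4) with ((v^2)^2) by ring. apply pow_incr; lra. }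
  unfold Rmin. destruct (Rle_dec (u^4) (u^2)), (Rle_dec (v^4) (v^2)); lra.
Qed.

Lemma rmin_nonneg u : 0 <= Rmin (u ^ 4) (u ^ 2).
Proof.
  assert (0 <= u^2) by apply pow2_ge_0. assert (0 <= u^4) by (replace (u^4) with ((u^2)^2) by ring; apply pow2_ge_0).
  unfold Rmin. destruct (Rle_dec _ _); lra.
Qed.

Lemma rmin_scale k x y : 0 <= k -> k * Rmin x y = Rmin (k * x) (k * y).
Proof.
  intros Hk. unfold Rmin. destruct (Rle_dec x y), (Rle_dec (k*x) (k*y)); try reflexivity.
  - assert (k * x <= k * y) by (apply Rmult_le_compat_l; lra). lra.
  - assert (k = 0 \/ 0 < k) as [->|Hk'] by lra. ring.
    assert (x <= y) by (apply Rmult_le_reg_l with k; lra). lra.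
Qed.

Lemma exp_mono x y : x <= y -> exp x <= exp y.
Proof. intros H. destruct (Req_dec x y) as [->|E]; [lra|]. left; apply exp_increasing; lra. Qed.

Lemma bound_to_exp A B c k z : 0 <= B -> 0 < c -> 0 < k ->
  exp (A + B * Rabs z - c * Rmin ((k * z) ^ 4) ((k * z) ^ 2)) <=
  exp (A + (B + 1) / k + (B + 1) ^ 2 / (4 * c * k ^ 2)) * exp (- Rabs z).
Proof.
  intros HB Hc Hk. rewrite <- exp_plus. apply exp_mono.
  set (t := Rabs z). assert (Ht : 0 <= t) by apply Rabs_pos.
  assert (Hz2 : (k * z) ^ 2 = (k * t) ^ 2) by (unfold t; rewrite !Rpow_mult_distr, pow2_abs; reflexivity).
  assert (Hz4 : (k * z) ^ 4 = (k * t) ^ 4) by (replace ((k*z)^4) with (((k*z)^2)^2) by ring; rewrite Hz2; ring).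
  rewrite Hz2, Hz4.
  assert (H1 : 0 <= (B + 1) / k) by (apply Rdiv_le_0_compat; lra).
  assert (H2 : 0 <= (B + 1) ^ 2 / (4 * c * k ^ 2)) by (apply Rdiv_le_0_compat; [apply pow2_ge_0| assert (0 < k^2) by (apply pow_lt; lra); nra]).
  destruct (Rle_dec (k * t) 1).
  - pose proof (rmin_nonneg (k * t)).
    assert (t <= 1 / k) by (apply Rmult_le_reg_l with k; [lra|]; field_simplify; lra).
    assert ((B + 1) * t <= (B + 1) / k) by (unfold Rdiv; replace ((B+1)/k) with ((B+1) * (1/k)) by (field; lra); apply Rmult_le_compat_l; lra).
    assert (0 <= c * Rmin ((k * t) ^ 4) ((k * t) ^ 2)) by (apply Rmult_le_pos; lra).
    lra.
  - assert (Hm : Rmin ((k * t) ^ 4) ((k * t) ^ 2) = (k * t) ^ 2).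
    { apply Rmin_right. replace ((k*t)^4) with ((k*t)^2 * (k*t)^2) by ring.
      assert (1 <= (k*t)^2) by (apply pow_R1_Rle; lra). nra. }
    rewrite Hm.
    assert (Hk2 : 0 < k ^ 2) by (apply pow_lt; lra).
    assert (0 <= c * k^2 * (t - (B + 1) / (2 * c * k ^ 2)) ^ 2) by (apply Rmult_le_pos; [nra|apply pow2_ge_0]).
    assert (c * k ^ 2 * (t - (B + 1) / (2 * c * k ^ 2)) ^ 2 = c * (k * t) ^ 2 - (B + 1) * t + (B + 1) ^ 2 / (4 * c * k ^ 2))
      by (field; lra).
    lra.
Qed.

Lemma exp_lip x y : Rabs (exp x - exp y) <= exp (Rmax x y) * Rabs (x - y).
Proof.
  destruct (MVT_abs exp exp y x) as [c [Hc Hcr]].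
  { intros c _. apply derivable_pt_lim_exp. }
  rewrite Hc. rewrite Rabs_right by (apply Rle_ge; left; apply exp_pos).
  apply Rmult_le_compat_r. apply Rabs_pos. apply exp_mono.
  unfold Rmin, Rmax in *. destruct (Rle_dec y x), (Rle_dec x y); lra.
Qed.

Lemma rmin_le x y x' y' : x <= x' -> y <= y' -> Rmin x y <= Rmin x' y'.
Proof. intros. unfold Rmin. destruct (Rle_dec x y), (Rle_dec x' y'); lra. Qed.

Lemma dom_uniform w N r z c p a0 : (forall i, (i < N)%nat -> 0 < w N i) -> (1 <= N)%nat ->
  0 < c -> 0 < a0 -> a0 <= / sqrt (emp_mom w N 2) -> 0 < p -> p <= 1 - emp_cdf w N c ->
  LN w N r z <= r ^ 2 + Rabs r * Rabs z - p / 20 * Rmin ((a0 * c * z) ^ 4) ((a0 * c * z) ^ 2).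
Proof.
  intros Hp HN Hc Ha0 Ha0a Hpp Hpc.
  pose proof (LN_upper w N r z Hp HN) as HU. cbv zeta in HU.
  set (Q := Rpower (INR N) (1/4)) in *. set (a := / sqrt (emp_mom w N 2)) in *.
  pose proof (INR_pos_N N HN).
  destruct (Q_facts N HN) as [HQ [HQ1 [HQ4 HQ3]]]. fold Q in HQ, HQ1, HQ4, HQ3.
  set (v := a * c * z / Q).
  assert (Hsum : sumN N (fun i => ind_gt (w N i) c) * Rmin (v ^ 4) (v ^ 2) <=
      sumN N (fun i => Rmin ((a * w N i * (z / Q)) ^ 4) ((a * w N i * (z / Q)) ^ 2))).
  { rewrite Rmult_comm, <- sumN_scal. apply sumN_le. intros i Hi. pose proof (Hp i Hi).
    unfold ind_gt. destruct (Rle_dec (w N i) c).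
    - rewrite Rmult_0_r. apply rmin_nonneg.
    - rewrite Rmult_1_r. apply rmin_mono. unfold v.
      replace ((a * c * z / Q) ^ 2) with ((a / Q)^2 * z^2 * c^2) by (field; lra).
      replace ((a * w N i * (z / Q)) ^ 2) with ((a / Q)^2 * z^2 * (w N i)^2) by (field; lra).
      apply Rmult_le_compat_l. apply Rmult_le_pos; apply pow2_ge_0. apply pow_incr; lra. }
  rewrite <- (Rmult_1_r (sumN N (fun i => ind_gt (w N i) c))) in Hsum.
  replace (sumN N (fun i => ind_gt (w N i) c) * 1) with (INR N * (1 - emp_cdf w N c)) in Hsum.
  2:{ rewrite one_minus_cdf by auto. field. lra. }
  assert (Hmin : Rmin ((a0 * c * z) ^ 4) ((a0 * c * z) ^ 2) <= INR N * Rmin (v ^ 4) (v ^ 2)).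
  { rewrite rmin_scale by lra. rewrite <- HQ4.
    assert (E4 : Q ^ 4 * v ^ 4 = (a * c * z) ^ 4) by (unfold v; field; lra).
    assert (E2 : Q ^ 4 * v ^ 2 = Q ^ 2 * (a * c * z) ^ 2) by (unfold v; field; lra).
    rewrite E4, E2.
    assert (Hac : (a0 * c * z) ^ 2 <= (a * c * z) ^ 2).
    { rewrite !Rpow_mult_distr. apply Rmult_le_compat_r. apply pow2_ge_0.
      apply Rmult_le_compat_r. apply pow2_ge_0. apply pow_incr; lra. }
    apply rmin_le.
    - replace ((a0 * c * z) ^ 4) with (((a0 * c * z) ^ 2)^2) by ring.
      replace ((a * c * z) ^ 4) with (((a * c * z) ^ 2)^2) by ring.
      apply pow_incr. split; [apply pow2_ge_0|auto].
    - assert (1 <= Q^2) by (apply pow_R1_Rle; lra). pose proof (pow2_ge_0 (a*c*z)). nra. }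
  assert (Hfin : p * Rmin ((a0 * c * z) ^ 4) ((a0 * c * z) ^ 2) <=
     sumN N (fun i => Rmin ((a * w N i * (z / Q)) ^ 4) ((a * w N i * (z / Q)) ^ 2))).
  { eapply Rle_trans; [|exact Hsum]. pose proof (rmin_nonneg (a0 * c * z)). pose proof (rmin_nonneg v).
    apply Rle_trans with (p * (INR N * Rmin (v ^ 4) (v ^ 2))). apply Rmult_le_compat_l; lra.
    replace (INR N * (1 - emp_cdf w N c) * Rmin (v ^ 4) (v ^ 2)) with ((1 - emp_cdf w N c) * (INR N * Rmin (v ^ 4) (v ^ 2))) by ring.
    apply Rmult_le_compat_r; [|auto]. apply Rmult_le_pos; lra. }
  unfold Rdiv. lra.
Qed.

Lemma dom_single w N r z : (forall i, (i < N)%nat -> 0 < w N i) -> (1 <= N)%nat ->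
  LN w N r z <= r ^ 2 + Rabs r * Rabs z -
    / 20 * Rmin ((/ sqrt (emp_mom w N 2) * w N 0%nat / Rpower (INR N) (1/4) * z) ^ 4)
                ((/ sqrt (emp_mom w N 2) * w N 0%nat / Rpower (INR N) (1/4) * z) ^ 2).
Proof.
  intros Hp HN. pose proof (LN_upper w N r z Hp HN) as HU. cbv zeta in HU.
  assert (H : Rmin ((/ sqrt (emp_mom w N 2) * w N 0%nat / Rpower (INR N) (1/4) * z) ^ 4)
                ((/ sqrt (emp_mom w N 2) * w N 0%nat / Rpower (INR N) (1/4) * z) ^ 2) <=
     sumN N (fun i => Rmin ((/ sqrt (emp_mom w N 2) * w N i * (z / Rpower (INR N) (1/4))) ^ 4)
                          ((/ sqrt (emp_mom w N 2) * w N i * (z / Rpower (INR N) (1/4))) ^ 2))).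
  { replace (/ sqrt (emp_mom w N 2) * w N 0%nat / Rpower (INR N) (1/4) * z) with
      (/ sqrt (emp_mom w N 2) * w N 0%nat * (z / Rpower (INR N) (1/4))) by (unfold Rdiv; ring).
    apply (sumN_ge_term N (fun i => Rmin ((/ sqrt (emp_mom w N 2) * w N i * (z / Rpower (INR N) (1/4))) ^ 4)
                          ((/ sqrt (emp_mom w N 2) * w N i * (z / Rpower (INR N) (1/4))) ^ 2)) 0%nat).
    lia. intros; apply rmin_nonneg. }
  lra.
Qed.

Theorem mainTheorem11
  (w : nat -> nat -> R) (F : R -> R) (EW EW2 EW4 : R)
  (Hpos : forall N i, (i < N)%nat -> 0 < w N i)
  (HF : is_cdf F)
  (Hdist : forall x, continuity_pt F x -> Un_cv (fun N => emp_cdf w N x) (F x))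
  (HEW : moment_cdf F 1 EW) (HEWpos : 0 < EW)
  (HEW2 : moment_cdf F 2 EW2) (Hcv2 : Un_cv (fun N => emp_mom w N 2) EW2)
  (HEW4 : moment_cdf F 4 EW4) (Hcv4 : Un_cv (fun N => emp_mom w N 4) EW4)
  (r : R) :
  exists (I : nat -> R) (Ilim : R),
    (forall N : nat, (1 <= N)%nat ->
       improper_integral
         (fun z => exp (- INR N *
            G w N (beta_c w N) (3 / 4) (z / Rpower (INR N) (1 / 4)) r))
         (I N)) /\
    improper_integral
      (fun z => exp (z * r * (EW / sqrt EW2) - / 12 * (EW4 / EW2 ^ 2) * z ^ 4))
      Ilim /\
    Un_cv I Ilim.
Proof.
  pose proof (m1_cv w F EW EW4 Hpos HF Hdist HEW HEW4 Hcv4) as Hcv1.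
  pose proof (UI4 w F EW4 Hpos HF Hdist HEW4 Hcv4) as HUI.
  assert (HE2 : 0 < EW2).
  { assert (EW ^ 2 - EW2 <= 0).
    { apply (lim_le (fun N => emp_mom w N 1 ^ 2 - emp_mom w N 2) _ 0 1).
      - apply CV_minus; auto. simpl. replace (EW * (EW * 1)) with (EW * EW) by ring.
        apply (Un_cv_ext (fun N => emp_mom w N 1 * emp_mom w N 1)). intros; simpl; ring.
        apply CV_mult; auto.
      - intros n Hn. pose proof (mom_CS w n Hn). lra. }
    pose proof (pow_lt EW 2 HEWpos). lra. }
  set (fn := fun N z => exp (LN w N r z)).
  set (f := fun z => exp (z * r * (EW / sqrt EW2) - / 12 * (EW4 / EW2 ^ 2) * z ^ 4)).
  assert (Hloc : forall M eps, 0 < eps -> exists N0, forall N, (N0 <= N)%nat -> forall x, Rabs x <= M ->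
            Rabs (fn N x - f x) <= eps).
  { intros M eps Heps. set (M' := Rmax M 0).
    assert (HM' : 0 <= M') by apply Rmax_r. assert (HMM : M <= M') by apply Rmax_l.
    set (Lmax := M' * Rabs r * Rabs (EW / sqrt EW2) + / 12 * Rabs (EW4 / EW2 ^ 2) * M' ^ 4).
    assert (HL : forall x, Rabs x <= M' -> x * r * (EW / sqrt EW2) - / 12 * (EW4 / EW2 ^ 2) * x ^ 4 <= Lmax).
    { intros x Hx. eapply Rle_trans. apply Rle_abs. eapply Rle_trans. apply Rabs_triang.
      rewrite Rabs_Ropp, !Rabs_mult. rewrite (Rabs_right (/12)) by lra.
      pose proof (abs_pow_le x M' 4 Hx). pose proof (Rabs_pos r). pose proof (Rabs_pos (EW / sqrt EW2)).
      pose proof (Rabs_pos (EW4 / EW2 ^ 2)). pose proof (Rabs_pos (x^4)). pose proof (Rabs_pos x).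
      unfold Lmax. apply Rplus_le_compat.
      - apply Rmult_le_compat_r; auto. apply Rmult_le_compat_r; auto.
      - apply Rmult_le_compat_l; auto. apply Rmult_le_pos; lra. }
    set (delta := Rmin 1 (eps / exp (Lmax + 1))).
    assert (Hd : 0 < delta) by (apply Rmin_pos; [lra|apply Rdiv_lt_0_compat; [lra|apply exp_pos]]).
    destruct (LN_cv w r EW EW2 EW4 Hpos HE2 Hcv1 Hcv2 Hcv4 HUI M' HM' delta Hd) as [N0 HN0].
    exists N0. intros N HN x Hx. unfold fn, f.
    specialize (HN0 N HN x ltac:(lra)). specialize (HL x ltac:(lra)).
    eapply Rle_trans. apply exp_lip.
    assert (delta <= 1) by apply Rmin_l. assert (delta <= eps / exp (Lmax + 1)) by apply Rmin_r.
    apply Rabs_le_between in HN0.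
    apply Rle_trans with (exp (Lmax + 1) * delta).
    - apply Rmult_le_compat. left; apply exp_pos. apply Rabs_pos.
      apply exp_mono. apply Rmax_lub; lra. apply Rabs_le; lra.
    - apply Rle_trans with (exp (Lmax + 1) * (eps / exp (Lmax + 1))).
      apply Rmult_le_compat_l; [left; apply exp_pos|auto]. right. field. apply Rgt_not_eq, exp_pos. }
  destruct (pos_fraction w F EW Hpos HF Hdist HEW HEWpos) as [c [p [Hc [Hp [Np HNp]]]]].
  destruct (eventually_cv _ _ 1 Hcv2 ltac:(lra)) as [Nb HNb].
  set (a0 := / sqrt (EW2 + 1)).
  assert (Ha0 : 0 < a0) by (apply Rinv_0_lt_compat, sqrt_lt_R0; lra).
  set (k := a0 * c).
  assert (Hk : 0 < k) by (unfold k; nra).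
  set (D := exp (r ^ 2 + (Rabs r + 1) / k + (Rabs r + 1) ^ 2 / (4 * (p / 20) * k ^ 2))).
  set (N1 := max 1 (max Np Nb)).
  assert (Hdom : forall N, (N1 <= N)%nat -> forall x, 0 <= fn N x <= D * exp (- Rabs x)).
  { intros N HN x. split. left; apply exp_pos. unfold fn.
    assert (HN1 : (1 <= N)%nat) by lia.
    assert (Ha0a : a0 <= / sqrt (emp_mom w N 2)).
    { specialize (HNb N ltac:(lia)). apply Rabs_le_between in HNb.
      pose proof (emp_mom_pos w N 2 (Hpos N) HN1).
      unfold a0. apply Rinv_le_contravar. apply sqrt_lt_R0; lra. apply sqrt_le_1_alt. lra. }
    pose proof (dom_uniform w N r x c p a0 (Hpos N) HN1 Hc Ha0 Ha0a Hp (HNp N ltac:(lia))).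
    eapply Rle_trans. apply exp_mono. exact H.
    apply (bound_to_exp (r ^ 2) (Rabs r) (p / 20) k x). apply Rabs_pos. lra. auto. }
  assert (HexI : forall N, exists l, (1 <= N)%nat -> improper_integral (fn N) l).
  { intros N. destruct (Compare_dec.le_lt_dec 1 N) as [HN|HN]; [|exists 0; intros; lia].
    set (kN := / sqrt (emp_mom w N 2) * w N 0%nat / Rpower (INR N) (1/4)).
    assert (HkN : 0 < kN).
    { unfold kN. destruct (Q_facts N HN) as [HQ _]. pose proof (emp_mom_pos w N 2 (Hpos N) HN).
      pose proof (Hpos N 0%nat ltac:(lia)). apply Rdiv_lt_0_compat; auto.
      apply Rmult_lt_0_compat; auto. apply Rinv_0_lt_compat, sqrt_lt_R0; auto. }
    set (DN := exp (r ^ 2 + (Rabs r + 1) / kN + (Rabs r + 1) ^ 2 / (4 * (/ 20) * kN ^ 2))).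
    destruct (improper_exists (fn N) DN) as [l [Hl _]].
    - intros x. apply fn_continuous; auto.
    - intros x. split. left; apply exp_pos. unfold fn.
      eapply Rle_trans. apply exp_mono. apply (dom_single w N r x (Hpos N) HN).
      apply (bound_to_exp (r ^ 2) (Rabs r) (/ 20) kN x). apply Rabs_pos. lra. auto.
    - exists l; auto. }
  set (I := fun N => proj1_sig (constructive_indefinite_description _ (HexI N))).
  assert (HI : forall N, (1 <= N)%nat -> improper_integral (fn N) (I N)).
  { intros N HN. unfold I. destruct (constructive_indefinite_description _ _) as [l Hl]. simpl. auto. }
  assert (Hfc : forall x, continuous f x).
  { intros x. unfold f. apply (ex_derive_continuous (fun z => exp (z * r * (EW / sqrt EW2) - / 12 * (EW4 / EW2 ^ 2) * z ^ 4))).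
    auto_derive; auto. }
  assert (Hfb : forall x, 0 <= f x <= D * exp (- Rabs x)).
  { intros x. split. left; unfold f; apply exp_pos.
    apply Rnot_lt_le. intros Hlt.
    destruct (Hloc (Rabs x) ((f x - D * exp (- Rabs x)) / 2) ltac:(lra)) as [N0 HN0].
    set (N := max N0 N1). specialize (HN0 N ltac:(lia) x (Rle_refl _)).
    specialize (Hdom N ltac:(lia) x). apply Rabs_le_between in HN0. lra. }
  destruct (improper_exists f D Hfc Hfb) as [Il [HIl _]].
  exists I, Il. split; [|split].
  - intros N HN. apply (HI N HN).
  - exact HIl.
  - apply (dct fn f D N1 I Il); auto.
    + intros N HN x. apply fn_continuous; auto. lia.
    + intros N HN. apply HI. lia.
Qed.
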